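(* The facets of the convex hull in $K\otimes\mathbb R\cong\mathbb R^3$ of the set of totally positive elements of $\mathcal O$ are precisely the translates, under multiplication by totally positive units of $\mathcal O$, of the two triangles with vertices $\{1,\ w^2,\ (w+1)^2\}$ and $\{1,\ w+2,\ (w+1)^2\}$.
   Context: $w=\zeta_7+\zeta_7^{-1}$ with $\zeta_7=e^{2\pi i/7}$, $K=\mathbb Q(w)$ the totally real cubic field of discriminant $49$, $\mathcal O=\mathbb Z[w]$ its ring of integers ($w^3+w^2-2w-1=0$). $K\otimes\mathbb R$ is identified with $\mathbb R^3$ via the three real embeddings; an element is totally positive if all three images are positive. *)

(* Defs.v *)
From Stdlib Require Import Reals List ZArith.
Open Scope R_scope.

(* A point of K (x) R = R^3, coordinates given by the three real embeddings. *)
Record pt := Pt { px : R; py : R; pz : R }.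

Definition padd (x y : pt) : pt := Pt (px x + px y) (py x + py y) (pz x + pz y).
Definition pscale (t : R) (x : pt) : pt := Pt (t * px x) (t * py x) (t * pz x).
(* multiplication in K (x) R = componentwise multiplication *)
Definition pmul (x y : pt) : pt := Pt (px x * px y) (py x * py y) (pz x * pz y).
Definition pzero : pt := Pt 0 0 0.

(* The three real embeddings send w = zeta_7 + zeta_7^{-1} to
   theta k = 2 cos (2 pi k / 7), k = 1, 2, 3 (the roots of x^3+x^2-2x-1). *)
Definition theta (k : nat) : R := 2 * cos (2 * PI * INR k / 7).

(* image in R^3 of a + b w + c w^2 (1, w, w^2 is a Z-basis of O = Z[w]) *)
Definition emb (a b c : Z) : pt :=
  let f k := IZR a + IZR b * theta k + IZR c * theta k ^ 2 in
  Pt (f 1%nat) (f 2%nat) (f 3%nat).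

Definition in_O (x : pt) : Prop := exists a b c : Z, x = emb a b c.

Definition totally_positive (x : pt) : Prop := 0 < px x /\ 0 < py x /\ 0 < pz x.

Definition unit_O (u : pt) : Prop :=
  in_O u /\ exists v, in_O v /\ pmul u v = Pt 1 1 1.

Definition O_plus (x : pt) : Prop := in_O x /\ totally_positive x.

Definition conv (S : pt -> Prop) (x : pt) : Prop :=
  exists l : list (R * pt),
    Forall (fun tp => 0 <= fst tp /\ S (snd tp)) l /\
    fold_right (fun tp s => fst tp + s) 0 l = 1 /\
    x = fold_right (fun tp acc => padd (pscale (fst tp) (snd tp)) acc) pzero l.

Definition lin (a x : pt) : R := px a * px x + py a * py x + pz a * pz x.

Definition psub (x y : pt) : pt := padd x (pscale (-1) y).

Definition aff_indep3 (p q r : pt) : Prop :=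
  forall s t : R, padd (pscale s (psub q p)) (pscale t (psub r p)) = pzero ->
    s = 0 /\ t = 0.

(* F is a facet of C in R^3: the intersection of C with a supporting plane
   {x | lin a x = c} (C lying in {lin a x >= c}), of affine dimension 2. *)
Definition is_facet (C F : pt -> Prop) : Prop :=
  exists (a : pt) (c : R),
    a <> pzero /\
    (forall x, C x -> c <= lin a x) /\
    (forall x, F x <-> (C x /\ lin a x = c)) /\
    exists p q r, F p /\ F q /\ F r /\ aff_indep3 p q r.

Definition one_O : pt := emb 1 0 0.
Definition w_O : pt := emb 0 1 0.

Definition tri1 (x : pt) : Prop :=
  x = one_O \/ x = pmul w_O w_O \/ x = pmul (padd w_O one_O) (padd w_O one_O).
Definition tri2 (x : pt) : Prop :=
  x = one_O \/ x = padd w_O (padd one_O one_O) \/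
  x = pmul (padd w_O one_O) (padd w_O one_O).

Definition mul_set (u : pt) (S : pt -> Prop) (y : pt) : Prop :=
  exists x, S x /\ y = pmul u x.

(* Main.v *)
Require Import Defs.
From Stdlib Require Import Reals Lra Lia Psatz ZArith List Classical.
Open Scope R_scope.

Definition w := theta 1.

Lemma theta_facts :
  w^3 + w^2 - 2*w - 1 = 0 /\ theta 2 = w^2 - 2 /\ theta 3 = 1 - w - w^2 /\ 1 < w < 2.
Proof.
  set (x := 2*PI/7).
  assert (Hw : w = 2 * cos x) by (unfold w, theta, x; simpl INR; f_equal; f_equal; field).
  assert (H2 : theta 2 = 2 * cos (2*x)) by (unfold theta, x; simpl INR; f_equal; f_equal; field).
  assert (H3 : theta 3 = 2 * cos (2*x + x)) by (unfold theta, x; simpl INR; f_equal; f_equal; field).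
  assert (Hc2 : cos (2*x) = 2 * cos x * cos x - 1) by apply cos_2a_cos.
  assert (Hc3 : cos (2*x + x) = 4 * cos x ^ 3 - 3 * cos x).
  { rewrite cos_plus, cos_2a_cos, sin_2a.
    assert (Hs := sin2_cos2 x). unfold Rsqr in Hs.
    replace (2 * sin x * cos x * sin x) with (2 * cos x * (sin x * sin x)) by ring.
    replace (sin x * sin x) with (1 - cos x * cos x) by lra. ring. }
  assert (H4 : cos (2*(2*x)) = cos (2*x + x)).
  { replace (2*(2*x)) with (2*PI - (2*x+x)) by (unfold x; field).
    rewrite cos_minus, cos_2PI, sin_2PI. ring. }
  rewrite cos_2a_cos, Hc2, Hc3 in H4.
  assert (Hpi := PI_RGT_0).
  assert (Hlo : 1/2 < cos x).
  { rewrite <- cos_PI3. apply cos_decreasing_1; unfold x; lra. }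
  assert (Hhi : cos x < 1).
  { rewrite <- cos_0. apply cos_decreasing_1; unfold x; lra. }
  assert (Hcub : w^3 + w^2 - 2*w - 1 = 0).
  { rewrite Hw.
    assert (E : (2*cos x - 2) * ((2*cos x)^3 + (2*cos x)^2 - 2*(2*cos x) - 1) = 0) by nra.
    apply Rmult_integral in E. destruct E as [E|E]; [lra| exact E]. }
  split; [exact Hcub|]. split; [rewrite H2, Hc2, Hw; ring|]. split; [|rewrite Hw; lra].
  rewrite H3, Hc3, Hw. rewrite Hw in Hcub. nra.
Qed.

Lemma w_cub : w^3 + w^2 - 2*w - 1 = 0.  Proof. apply theta_facts. Qed.
Lemma th1 : theta 1 = w. Proof. reflexivity. Qed.
Lemma th2 : theta 2 = w^2 - 2. Proof. apply theta_facts. Qed.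
Lemma th3 : theta 3 = 1 - w - w^2. Proof. apply theta_facts. Qed.

Lemma w_bnd : 1.2469796 < w < 1.2469797.
Proof.
  destruct theta_facts as [H [_ [_ [H1 H2]]]].
  split.
  - destruct (Rlt_le_dec 1.2469796 w) as [h|h]; [exact h|exfalso]. nra.
  - destruct (Rlt_le_dec w 1.2469797) as [h|h]; [exact h|exfalso]. nra.
Qed.

Lemma tb1 : 1.2469796 < theta 1 < 1.2469797.
Proof. rewrite th1. apply w_bnd. Qed.
Lemma tb1s : 1.5549581 < theta 1 ^ 2 < 1.5549584.
Proof. rewrite th1. destruct w_bnd. split; nra. Qed.
Lemma tb2 : -0.4450419 < theta 2 < -0.4450416.
Proof. rewrite th2. destruct w_bnd. split; nra. Qed.
Lemma th2s : theta 2 ^ 2 = 3 - w - w^2.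
Proof. rewrite th2. transitivity (3 - w - w^2 + (w^3+w^2-2*w-1)*(w-1)); [ring| rewrite w_cub; ring]. Qed.
Lemma tb2s : 0.1980619 < theta 2 ^ 2 < 0.1980623.
Proof. rewrite th2s. destruct w_bnd. split; nra. Qed.
Lemma tb3 : -1.8019381 < theta 3 < -1.8019377.
Proof. rewrite th3. destruct w_bnd. split; nra. Qed.
Lemma th3s : theta 3 ^ 2 = 2 + w.
Proof. rewrite th3. transitivity (2 + w + (w^3+w^2-2*w-1)*(w+1)); [ring| rewrite w_cub; ring]. Qed.
Lemma tb3s : 3.2469796 < theta 3 ^ 2 < 3.2469797.
Proof. rewrite th3s. destruct w_bnd. split; nra. Qed.

Lemma cub1 : theta 1 ^3 + theta 1 ^2 - 2 * theta 1 - 1 = 0.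
Proof. rewrite th1. apply w_cub. Qed.
Lemma cub2 : theta 2 ^3 + theta 2 ^2 - 2 * theta 2 - 1 = 0.
Proof. rewrite th2. transitivity ((w^3+w^2-2*w-1)*(1 - 2*w - w^2 + w^3)); [ring| rewrite w_cub; ring]. Qed.
Lemma cub3 : theta 3 ^3 + theta 3 ^2 - 2 * theta 3 - 1 = 0.
Proof. rewrite th3. transitivity ((w^3+w^2-2*w-1)*(1 + w - 2*w^2 - w^3)); [ring| rewrite w_cub; ring]. Qed.

Definition S (j : nat) := theta 1 ^ j + theta 2 ^ j + theta 3 ^ j.
Lemma S0 : S 0 = 3. Proof. unfold S; simpl; ring. Qed.
Lemma S1 : S 1 = -1. Proof. unfold S; rewrite th1, th2, th3; ring. Qed.
Lemma S2 : S 2 = 5.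
Proof. unfold S; rewrite th1, th2, th3.
  transitivity (5 + (w^3+w^2-2*w-1)*(2*w)); [ring| rewrite w_cub; ring]. Qed.
Lemma S3 : S 3 = -4.
Proof. unfold S; rewrite th1, th2, th3.
  transitivity (-4 + (w^3+w^2-2*w-1)*(3-3*w-3*w^2)); [ring| rewrite w_cub; ring]. Qed.
Lemma S4 : S 4 = 13.
Proof. unfold S; rewrite th1, th2, th3.
  transitivity (13 + (w^3+w^2-2*w-1)*(-4+12*w+2*w^2-4*w^3+2*w^4+2*w^5)); [ring| rewrite w_cub; ring]. Qed.

Definition ev (t a b c : R) := a + b*t + c*t^2.
Definition Er (a b c : R) : pt := Pt (ev (theta 1) a b c) (ev (theta 2) a b c) (ev (theta 3) a b c).
Lemma emb_Er a b c : emb a b c = Er (IZR a) (IZR b) (IZR c).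
Proof. reflexivity. Qed.

Lemma trace_id d0 d1 d2 x0 x1 x2 :
  lin (Er d0 d1 d2) (Er x0 x1 x2) =
  (3*d0 - d1 + 5*d2) * x0 + (-d0 + 5*d1 - 4*d2) * x1 + (5*d0 - 4*d1 + 13*d2) * x2.
Proof.
  transitivity (d0*x0*S 0 + (d0*x1+d1*x0)*S 1 + (d0*x2+d1*x1+d2*x0)*S 2
     + (d1*x2+d2*x1)*S 3 + d2*x2*S 4).
  - unfold lin, Er, ev, S; simpl; ring.
  - rewrite S0, S1, S2, S3, S4; ring.
Qed.

Lemma ev_mul t a0 a1 a2 b0 b1 b2 : t^3 + t^2 - 2*t - 1 = 0 ->
  ev t a0 a1 a2 * ev t b0 b1 b2 =
  ev t (a0*b0 + (a1*b2+a2*b1) - a2*b2)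
       (a0*b1+a1*b0 + 2*(a1*b2+a2*b1) - a2*b2)
       (a0*b2+a1*b1+a2*b0 - (a1*b2+a2*b1) + 3*(a2*b2)).
Proof.
  intro H. unfold ev.
  transitivity (ev t (a0*b0 + (a1*b2+a2*b1) - a2*b2)
       (a0*b1+a1*b0 + 2*(a1*b2+a2*b1) - a2*b2)
       (a0*b2+a1*b1+a2*b0 - (a1*b2+a2*b1) + 3*(a2*b2))
     + (t^3+t^2-2*t-1)*((a1*b2+a2*b1) + a2*b2*(t-1))); unfold ev; [ring| rewrite H; ring].
Qed.

Record Z3 := mkZ3 { z0 : Z; z1 : Z; z2 : Z }.
Definition embz (x : Z3) : pt := emb (z0 x) (z1 x) (z2 x).
Definition mulz (a b : Z3) : Z3 :=
  mkZ3 (z0 a*z0 b + (z1 a*z2 b+z2 a*z1 b) - z2 a*z2 b)%Z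
       (z0 a*z1 b+z1 a*z0 b + 2*(z1 a*z2 b+z2 a*z1 b) - z2 a*z2 b)%Z
       (z0 a*z2 b+z1 a*z1 b+z2 a*z0 b - (z1 a*z2 b+z2 a*z1 b) + 3*(z2 a*z2 b))%Z.
Definition dotz (l x : Z3) : Z := (z0 l * z0 x + z1 l * z1 x + z2 l * z2 x)%Z.
Definition TPz (x : Z3) := totally_positive (embz x).
Definition e3 := mkZ3 1 0 0.

Lemma ev_IZR t a0 a1 a2 b0 b1 b2 : t^3 + t^2 - 2*t - 1 = 0 ->
  ev t (IZR a0) (IZR a1) (IZR a2) * ev t (IZR b0) (IZR b1) (IZR b2) =
  ev t (IZR (a0*b0 + (a1*b2+a2*b1) - a2*b2))
       (IZR (a0*b1+a1*b0 + 2*(a1*b2+a2*b1) - a2*b2))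
       (IZR (a0*b2+a1*b1+a2*b0 - (a1*b2+a2*b1) + 3*(a2*b2))).
Proof.
  intro H. rewrite ev_mul by exact H.
  repeat rewrite ?minus_IZR, ?plus_IZR, ?mult_IZR. reflexivity.
Qed.

Lemma embz_mul x y : pmul (embz x) (embz y) = embz (mulz x y).
Proof.
  destruct x as [a0 a1 a2], y as [b0 b1 b2].
  unfold embz, pmul. rewrite !emb_Er. unfold Er. cbn [px py pz z0 z1 z2 mulz].
  rewrite (ev_IZR _ _ _ _ _ _ _ cub1), (ev_IZR _ _ _ _ _ _ _ cub2), (ev_IZR _ _ _ _ _ _ _ cub3).
  reflexivity.
Qed.

Lemma TPz_mul x y : TPz x -> TPz y -> TPz (mulz x y).
Proof.
  unfold TPz, totally_positive. rewrite <- embz_mul. unfold pmul; simpl.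
  intros [? [? ?]] [? [? ?]]. split; [|split]; apply Rmult_lt_0_compat; assumption.
Qed.

Lemma embz_e3 : embz e3 = Pt 1 1 1.
Proof. unfold embz, e3, emb; simpl. f_equal; ring. Qed.

Lemma lin_embz d0 d1 d2 x :
  lin (Er d0 d1 d2) (embz x) =
  (3*d0 - d1 + 5*d2) * IZR (z0 x) + (-d0 + 5*d1 - 4*d2) * IZR (z1 x) + (5*d0 - 4*d1 + 13*d2) * IZR (z2 x).
Proof. unfold embz. rewrite emb_Er. apply trace_id. Qed.

Lemma cut_gen (d0 d1 d2 : R) (l : Z3) :
  0 < ev (theta 1) d0 d1 d2 -> 0 < ev (theta 2) d0 d1 d2 -> 0 < ev (theta 3) d0 d1 d2 ->
  IZR (z0 l) = 3*d0 - d1 + 5*d2 -> IZR (z1 l) = -d0 + 5*d1 - 4*d2 ->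
  IZR (z2 l) = 5*d0 - 4*d1 + 13*d2 ->
  forall x, TPz x -> (1 <= dotz l x)%Z.
Proof.
  intros p1 p2 p3 e0 e1 e2 x Hx.
  assert (H : lin (Er d0 d1 d2) (embz x) = IZR (dotz l x)).
  { rewrite lin_embz. unfold dotz. rewrite !plus_IZR, !mult_IZR. rewrite e0, e1, e2. ring. }
  assert (Hp : 0 < lin (Er d0 d1 d2) (embz x)).
  { unfold TPz, totally_positive in Hx. destruct Hx as [h1 [h2 h3]].
    unfold lin, Er; cbn [px py pz].
    assert (0 < ev (theta 1) d0 d1 d2 * px (embz x)) by (apply Rmult_lt_0_compat; assumption).
    assert (0 < ev (theta 2) d0 d1 d2 * py (embz x)) by (apply Rmult_lt_0_compat; assumption).
    assert (0 < ev (theta 3) d0 d1 d2 * pz (embz x)) by (apply Rmult_lt_0_compat; assumption).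
    lra. }
  rewrite H in Hp. apply lt_IZR in Hp. lia.
Qed.

Ltac evpos := unfold ev; generalize tb1 tb1s tb2 tb2s tb3 tb3s; intros; lra.
Ltac cutp d0 d1 d2 := intros x; apply (cut_gen d0 d1 d2); [evpos|evpos|evpos|simpl; lra|simpl; lra|simpl; lra].

Lemma cut_1_m1_2 : forall x, TPz x -> (1 <= dotz (mkZ3 (1) (-1) (2)) x)%Z. Proof. cutp (2/7) (-1/7) (0/1). Qed.
Lemma cut_1_0_1 : forall x, TPz x -> (1 <= dotz (mkZ3 (1) (0) (1)) x)%Z. Proof. cutp (4/7) (0/1) (-1/7). Qed.
Lemma cut_1_0_2 : forall x, TPz x -> (1 <= dotz (mkZ3 (1) (0) (2)) x)%Z. Proof. cutp (1/7) (1/7) (1/7). Qed.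
Lemma cut_2_m3_6 : forall x, TPz x -> (1 <= dotz (mkZ3 (2) (-3) (6)) x)%Z. Proof. cutp (-1/7) (-2/7) (3/7). Qed.
Lemma cut_2_m2_5 : forall x, TPz x -> (1 <= dotz (mkZ3 (2) (-2) (5)) x)%Z. Proof. cutp (1/7) (-1/7) (2/7). Qed.
Lemma cut_2_m1_1 : forall x, TPz x -> (1 <= dotz (mkZ3 (2) (-1) (1)) x)%Z. Proof. cutp (12/7) (-3/7) (-5/7). Qed.
Lemma cut_2_m1_2 : forall x, TPz x -> (1 <= dotz (mkZ3 (2) (-1) (2)) x)%Z. Proof. cutp (9/7) (-2/7) (-3/7). Qed.
Lemma cut_2_1_3 : forall x, TPz x -> (1 <= dotz (mkZ3 (2) (1) (3)) x)%Z. Proof. cutp (4/7) (3/7) (1/7). Qed.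
Lemma cut_2_2_3 : forall x, TPz x -> (1 <= dotz (mkZ3 (2) (2) (3)) x)%Z. Proof. cutp (3/7) (5/7) (2/7). Qed.
Lemma cut_3_m5_9 : forall x, TPz x -> (1 <= dotz (mkZ3 (3) (-5) (9)) x)%Z. Proof. cutp (-1/7) (-4/7) (4/7). Qed.
Lemma cut_3_1_6 : forall x, TPz x -> (1 <= dotz (mkZ3 (3) (1) (6)) x)%Z. Proof. cutp (2/7) (5/7) (4/7). Qed.
Lemma cut_3_3_5 : forall x, TPz x -> (1 <= dotz (mkZ3 (3) (3) (5)) x)%Z. Proof. cutp (3/7) (8/7) (4/7). Qed.
Lemma cut_5_m8_14 : forall x, TPz x -> (1 <= dotz (mkZ3 (5) (-8) (14)) x)%Z. Proof. cutp (1/7) (-1/1) (5/7). Qed.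
Lemma cut_5_m7_15 : forall x, TPz x -> (1 <= dotz (mkZ3 (5) (-7) (15)) x)%Z. Proof. cutp (-3/7) (-4/7) (8/7). Qed.
Lemma cut_5_m4_5 : forall x, TPz x -> (1 <= dotz (mkZ3 (5) (-4) (5)) x)%Z. Proof. cutp (24/7) (-8/7) (-9/7). Qed.
Lemma cut_5_4_9 : forall x, TPz x -> (1 <= dotz (mkZ3 (5) (4) (9)) x)%Z. Proof. cutp (4/7) (12/7) (1/1). Qed.
Lemma cut_6_m1_14 : forall x, TPz x -> (1 <= dotz (mkZ3 (6) (-1) (14)) x)%Z. Proof. cutp (1/7) (6/7) (9/7). Qed.
Lemma cut_9_m4_2 : forall x, TPz x -> (1 <= dotz (mkZ3 (9) (-4) (2)) x)%Z. Proof. cutp (61/7) (-15/7) (-27/7). Qed.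
Definition Vset1 (x:Z3) := x = (mkZ3 (1) (0) (0)) \/ x = (mkZ3 (0) (0) (1)) \/ x = (mkZ3 (1) (2) (1)).
Definition nf1 := (mkZ3 (2) (-1) (2)).
Lemma I1_1 : forall x, TPz x -> (2 <= dotz nf1 x)%Z /\ (dotz nf1 x = 2%Z -> Vset1 x).
Proof.
  intros x H. pose proof (cut_2_m1_2 x H); pose proof (cut_1_0_1 x H); pose proof (cut_5_m4_5 x H); pose proof (cut_1_m1_2 x H); pose proof (cut_2_m1_1 x H);
  destruct x as [a b c]. unfold nf1, Vset1, dotz in *; cbn [z0 z1 z2] in *. split; [lia|].
  intro He. assert (D : (a = 1 /\ b = 0 /\ c = 0)%Z \/ (a = 0 /\ b = 0 /\ c = 1)%Z \/ (a = 1 /\ b = 2 /\ c = 1)%Z) by lia.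
  destruct D as [[-> [-> ->]]|[[-> [-> ->]]|[-> [-> ->]]]]; auto.
Qed.
Definition Vset2 (x:Z3) := x = (mkZ3 (1) (0) (0)) \/ x = (mkZ3 (2) (1) (0)) \/ x = (mkZ3 (1) (2) (1)).
Definition nf2 := (mkZ3 (1) (-1) (2)).
Lemma I1_2 : forall x, TPz x -> (1 <= dotz nf2 x)%Z /\ (dotz nf2 x = 1%Z -> Vset2 x).
Proof.
  intros x H. pose proof (cut_1_m1_2 x H); pose proof (cut_1_0_1 x H); pose proof (cut_5_m8_14 x H); pose proof (cut_2_m1_1 x H); pose proof (cut_1_0_2 x H); pose proof (cut_2_m3_6 x H);
  destruct x as [a b c]. unfold nf2, Vset2, dotz in *; cbn [z0 z1 z2] in *. split; [lia|].
  intro He. assert (D : (a = 1 /\ b = 0 /\ c = 0)%Z \/ (a = 2 /\ b = 1 /\ c = 0)%Z \/ (a = 1 /\ b = 2 /\ c = 1)%Z) by lia.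
  destruct D as [[-> [-> ->]]|[[-> [-> ->]]|[-> [-> ->]]]]; auto.
Qed.
Definition Vset3 (x:Z3) := x = (mkZ3 (5) (-1) (-2)) \/ x = (mkZ3 (1) (0) (0)) \/ x = (mkZ3 (2) (1) (0)).
Definition nf3 := (mkZ3 (2) (-2) (5)).
Lemma I1_3 : forall x, TPz x -> (2 <= dotz nf3 x)%Z /\ (dotz nf3 x = 2%Z -> Vset3 x).
Proof.
  intros x H. pose proof (cut_2_m2_5 x H); pose proof (cut_1_0_1 x H); pose proof (cut_5_m7_15 x H); pose proof (cut_1_0_2 x H); pose proof (cut_3_m5_9 x H);
  destruct x as [a b c]. unfold nf3, Vset3, dotz in *; cbn [z0 z1 z2] in *. split; [lia|].
  intro He. assert (D : (a = 5 /\ b = -1 /\ c = -2)%Z \/ (a = 1 /\ b = 0 /\ c = 0)%Z \/ (a = 2 /\ b = 1 /\ c = 0)%Z) by lia.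
  destruct D as [[-> [-> ->]]|[[-> [-> ->]]|[-> [-> ->]]]]; auto.
Qed.
Definition Vset4 (x:Z3) := x = (mkZ3 (0) (-1) (1)) \/ x = (mkZ3 (1) (0) (0)) \/ x = (mkZ3 (0) (0) (1)).
Definition nf4 := (mkZ3 (1) (0) (1)).
Lemma I1_4 : forall x, TPz x -> (1 <= dotz nf4 x)%Z /\ (dotz nf4 x = 1%Z -> Vset4 x).
Proof.
  intros x H. pose proof (cut_1_0_1 x H); pose proof (cut_9_m4_2 x H); pose proof (cut_3_1_6 x H); pose proof (cut_2_2_3 x H); pose proof (cut_1_m1_2 x H);
  destruct x as [a b c]. unfold nf4, Vset4, dotz in *; cbn [z0 z1 z2] in *. split; [lia|].
  intro He. assert (D : (a = 0 /\ b = -1 /\ c = 1)%Z \/ (a = 1 /\ b = 0 /\ c = 0)%Z \/ (a = 0 /\ b = 0 /\ c = 1)%Z) by lia.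
  destruct D as [[-> [-> ->]]|[[-> [-> ->]]|[-> [-> ->]]]]; auto.
Qed.
Definition Vset5 (x:Z3) := x = (mkZ3 (3) (-1) (-1)) \/ x = (mkZ3 (0) (-1) (1)) \/ x = (mkZ3 (1) (0) (0)).
Definition nf5 := (mkZ3 (2) (1) (3)).
Lemma I1_5 : forall x, TPz x -> (2 <= dotz nf5 x)%Z /\ (dotz nf5 x = 2%Z -> Vset5 x).
Proof.
  intros x H. pose proof (cut_2_1_3 x H); pose proof (cut_1_0_1 x H); pose proof (cut_5_4_9 x H); pose proof (cut_2_2_3 x H); pose proof (cut_1_m1_2 x H);
  destruct x as [a b c]. unfold nf5, Vset5, dotz in *; cbn [z0 z1 z2] in *. split; [lia|].
  intro He. assert (D : (a = 3 /\ b = -1 /\ c = -1)%Z \/ (a = 0 /\ b = -1 /\ c = 1)%Z \/ (a = 1 /\ b = 0 /\ c = 0)%Z) by lia.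
  destruct D as [[-> [-> ->]]|[[-> [-> ->]]|[-> [-> ->]]]]; auto.
Qed.
Definition Vset6 (x:Z3) := x = (mkZ3 (3) (-1) (-1)) \/ x = (mkZ3 (5) (-1) (-2)) \/ x = (mkZ3 (1) (0) (0)).
Definition nf6 := (mkZ3 (1) (0) (2)).
Lemma I1_6 : forall x, TPz x -> (1 <= dotz nf6 x)%Z /\ (dotz nf6 x = 1%Z -> Vset6 x).
Proof.
  intros x H. pose proof (cut_1_0_2 x H); pose proof (cut_1_0_1 x H); pose proof (cut_6_m1_14 x H); pose proof (cut_3_3_5 x H); pose proof (cut_2_m3_6 x H);
  destruct x as [a b c]. unfold nf6, Vset6, dotz in *; cbn [z0 z1 z2] in *. split; [lia|].
  intro He. assert (D : (a = 3 /\ b = -1 /\ c = -1)%Z \/ (a = 5 /\ b = -1 /\ c = -2)%Z \/ (a = 1 /\ b = 0 /\ c = 0)%Z) by lia.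
  destruct D as [[-> [-> ->]]|[[-> [-> ->]]|[-> [-> ->]]]]; auto.
Qed.

Lemma Z3_eq a b c d e f : a = d -> b = e -> c = f -> mkZ3 a b c = mkZ3 d e f.
Proof. intros; subst; reflexivity. Qed.

Lemma mulz_comm x y : mulz x y = mulz y x.
Proof. destruct x as [x0 x1 x2], y as [y0 y1 y2]; unfold mulz; apply Z3_eq; cbn [z0 z1 z2]; ring. Qed.
Lemma mulz_assoc x y z : mulz x (mulz y z) = mulz (mulz x y) z.
Proof. destruct x as [x0 x1 x2], y as [y0 y1 y2], z as [w0 w1 w2]; unfold mulz; apply Z3_eq; cbn [z0 z1 z2]; ring. Qed.
Lemma mulz_e3 x : mulz e3 x = x.
Proof. destruct x as [x0 x1 x2]; unfold mulz, e3; apply Z3_eq; cbn [z0 z1 z2]; ring. Qed.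

Definition kvec (n u : Z3) : Z3 :=
  mkZ3 (dotz n (mulz u e3)) (dotz n (mulz u (mkZ3 0 1 0))) (dotz n (mulz u (mkZ3 0 0 1))).
Lemma dot_mul n u x : dotz n (mulz u x) = dotz (kvec n u) x.
Proof. destruct n as [n0 n1 n2], u as [u0 u1 u2], x as [x0 x1 x2]; unfold kvec, dotz, mulz, e3; cbn [z0 z1 z2]; ring. Qed.

Definition Uz (u : Z3) := TPz u /\ exists v, mulz u v = e3.

Lemma TPz_inv u v : TPz u -> mulz u v = e3 -> TPz v.
Proof.
  intros Hu Huv. assert (H := embz_mul u v). rewrite Huv, embz_e3 in H.
  assert (h1 := f_equal px H). assert (h2 := f_equal py H). assert (h3 := f_equal pz H).
  unfold pmul in h1, h2, h3. cbn [px py pz] in h1, h2, h3.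
  unfold TPz, totally_positive in *. 
  destruct Hu as [p1 [p2 p3]]. split; [|split]; nra.
Qed.

Lemma Uz_mul u v : Uz u -> Uz v -> Uz (mulz u v).
Proof.
  intros [Hu [u' Hu']] [Hv [v' Hv']]. split; [apply TPz_mul; auto|].
  exists (mulz u' v'). rewrite mulz_assoc.
  replace (mulz (mulz u v) u') with (mulz v (mulz u u')).
  - rewrite Hu'. rewrite (mulz_comm v e3), mulz_e3. exact Hv'.
  - rewrite (mulz_comm u v), mulz_assoc. reflexivity.
Qed.

Lemma Uz_inv u v : Uz u -> mulz u v = e3 -> Uz v.
Proof.
  intros [Hu _] H. split; [eapply TPz_inv; eauto|]. exists u. rewrite mulz_comm; exact H.
Qed.

Definition al := mkZ3 0 0 1.
Definition be := mkZ3 2 1 0.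
Definition ab := mkZ3 1 2 1.
Definition ali := mkZ3 5 (-1) (-2).
Definition bei := mkZ3 0 (-1) 1.
Definition abi := mkZ3 3 (-1) (-1).

Ltac tpnum := unfold TPz, totally_positive, embz, al, be, ab, ali, bei, abi, e3; rewrite emb_Er; unfold Er, ev; cbn [px py pz z0 z1 z2];
  generalize tb1 tb1s tb2 tb2s tb3 tb3s; intros; repeat split; lra.

Lemma TP_e3 : TPz e3. Proof. tpnum. Qed.
Lemma TP_al : TPz al. Proof. tpnum. Qed.
Lemma TP_be : TPz be. Proof. tpnum. Qed.
Lemma TP_ab : TPz ab. Proof. tpnum. Qed.
Lemma TP_ali : TPz ali. Proof. tpnum. Qed.
Lemma TP_bei : TPz bei. Proof. tpnum. Qed.
Lemma TP_abi : TPz abi. Proof. tpnum. Qed.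

Lemma U_al : Uz al. Proof. split; [apply TP_al| exists ali; reflexivity]. Qed.
Lemma U_be : Uz be. Proof. split; [apply TP_be| exists bei; reflexivity]. Qed.
Lemma U_ab : Uz ab. Proof. split; [apply TP_ab| exists abi; reflexivity]. Qed.
Lemma U_ali : Uz ali. Proof. split; [apply TP_ali| exists al; reflexivity]. Qed.
Lemma U_bei : Uz bei. Proof. split; [apply TP_bei| exists be; reflexivity]. Qed.
Lemma U_abi : Uz abi. Proof. split; [apply TP_abi| exists ab; reflexivity]. Qed.
Lemma U_e3 : Uz e3. Proof. split; [apply TP_e3| exists e3; reflexivity]. Qed.
Lemma inter_1_2 x : Vset1 x -> Vset2 x -> x = (mkZ3 (1) (0) (0)) \/ x = (mkZ3 (1) (2) (1)).
Proof. unfold Vset1, Vset2. intros [ -> | [ -> | -> ] ] [H|[H|H]]; try discriminate H; auto. Qed.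
Lemma pex_1_2 P Q R : P <> Q -> P <> R -> Q <> R -> Vset1 P -> Vset1 Q -> Vset1 R -> Vset2 P -> Vset2 Q -> Vset2 R -> False.
Proof. intros n1 n2 n3 a1 a2 a3 b1 b2 b3. destruct (inter_1_2 P a1 b1) as [hP|hP]; destruct (inter_1_2 Q a2 b2) as [hQ|hQ]; destruct (inter_1_2 R a3 b3) as [hR|hR]; subst; congruence. Qed.
Lemma inter_1_3 x : Vset1 x -> Vset3 x -> x = (mkZ3 (1) (0) (0)).
Proof. unfold Vset1, Vset3. intros [ -> | [ -> | -> ] ] [H|[H|H]]; try discriminate H; auto. Qed.
Lemma pex_1_3 P Q R : P <> Q -> P <> R -> Q <> R -> Vset1 P -> Vset1 Q -> Vset1 R -> Vset3 P -> Vset3 Q -> Vset3 R -> False.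
Proof. intros n1 n2 n3 a1 a2 a3 b1 b2 b3. pose proof (inter_1_3 P a1 b1) as hP; pose proof (inter_1_3 Q a2 b2) as hQ. subst; congruence. Qed.
Lemma inter_1_4 x : Vset1 x -> Vset4 x -> x = (mkZ3 (1) (0) (0)) \/ x = (mkZ3 (0) (0) (1)).
Proof. unfold Vset1, Vset4. intros [ -> | [ -> | -> ] ] [H|[H|H]]; try discriminate H; auto. Qed.
Lemma pex_1_4 P Q R : P <> Q -> P <> R -> Q <> R -> Vset1 P -> Vset1 Q -> Vset1 R -> Vset4 P -> Vset4 Q -> Vset4 R -> False.
Proof. intros n1 n2 n3 a1 a2 a3 b1 b2 b3. destruct (inter_1_4 P a1 b1) as [hP|hP]; destruct (inter_1_4 Q a2 b2) as [hQ|hQ]; destruct (inter_1_4 R a3 b3) as [hR|hR]; subst; congruence. Qed.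
Lemma inter_1_5 x : Vset1 x -> Vset5 x -> x = (mkZ3 (1) (0) (0)).
Proof. unfold Vset1, Vset5. intros [ -> | [ -> | -> ] ] [H|[H|H]]; try discriminate H; auto. Qed.
Lemma pex_1_5 P Q R : P <> Q -> P <> R -> Q <> R -> Vset1 P -> Vset1 Q -> Vset1 R -> Vset5 P -> Vset5 Q -> Vset5 R -> False.
Proof. intros n1 n2 n3 a1 a2 a3 b1 b2 b3. pose proof (inter_1_5 P a1 b1) as hP; pose proof (inter_1_5 Q a2 b2) as hQ. subst; congruence. Qed.
Lemma inter_1_6 x : Vset1 x -> Vset6 x -> x = (mkZ3 (1) (0) (0)).
Proof. unfold Vset1, Vset6. intros [ -> | [ -> | -> ] ] [H|[H|H]]; try discriminate H; auto. Qed.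
Lemma pex_1_6 P Q R : P <> Q -> P <> R -> Q <> R -> Vset1 P -> Vset1 Q -> Vset1 R -> Vset6 P -> Vset6 Q -> Vset6 R -> False.
Proof. intros n1 n2 n3 a1 a2 a3 b1 b2 b3. pose proof (inter_1_6 P a1 b1) as hP; pose proof (inter_1_6 Q a2 b2) as hQ. subst; congruence. Qed.
Lemma inter_2_3 x : Vset2 x -> Vset3 x -> x = (mkZ3 (1) (0) (0)) \/ x = (mkZ3 (2) (1) (0)).
Proof. unfold Vset2, Vset3. intros [ -> | [ -> | -> ] ] [H|[H|H]]; try discriminate H; auto. Qed.
Lemma pex_2_3 P Q R : P <> Q -> P <> R -> Q <> R -> Vset2 P -> Vset2 Q -> Vset2 R -> Vset3 P -> Vset3 Q -> Vset3 R -> False.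
Proof. intros n1 n2 n3 a1 a2 a3 b1 b2 b3. destruct (inter_2_3 P a1 b1) as [hP|hP]; destruct (inter_2_3 Q a2 b2) as [hQ|hQ]; destruct (inter_2_3 R a3 b3) as [hR|hR]; subst; congruence. Qed.
Lemma inter_2_4 x : Vset2 x -> Vset4 x -> x = (mkZ3 (1) (0) (0)).
Proof. unfold Vset2, Vset4. intros [ -> | [ -> | -> ] ] [H|[H|H]]; try discriminate H; auto. Qed.
Lemma pex_2_4 P Q R : P <> Q -> P <> R -> Q <> R -> Vset2 P -> Vset2 Q -> Vset2 R -> Vset4 P -> Vset4 Q -> Vset4 R -> False.
Proof. intros n1 n2 n3 a1 a2 a3 b1 b2 b3. pose proof (inter_2_4 P a1 b1) as hP; pose proof (inter_2_4 Q a2 b2) as hQ. subst; congruence. Qed.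
Lemma inter_2_5 x : Vset2 x -> Vset5 x -> x = (mkZ3 (1) (0) (0)).
Proof. unfold Vset2, Vset5. intros [ -> | [ -> | -> ] ] [H|[H|H]]; try discriminate H; auto. Qed.
Lemma pex_2_5 P Q R : P <> Q -> P <> R -> Q <> R -> Vset2 P -> Vset2 Q -> Vset2 R -> Vset5 P -> Vset5 Q -> Vset5 R -> False.
Proof. intros n1 n2 n3 a1 a2 a3 b1 b2 b3. pose proof (inter_2_5 P a1 b1) as hP; pose proof (inter_2_5 Q a2 b2) as hQ. subst; congruence. Qed.
Lemma inter_2_6 x : Vset2 x -> Vset6 x -> x = (mkZ3 (1) (0) (0)).
Proof. unfold Vset2, Vset6. intros [ -> | [ -> | -> ] ] [H|[H|H]]; try discriminate H; auto. Qed.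
Lemma pex_2_6 P Q R : P <> Q -> P <> R -> Q <> R -> Vset2 P -> Vset2 Q -> Vset2 R -> Vset6 P -> Vset6 Q -> Vset6 R -> False.
Proof. intros n1 n2 n3 a1 a2 a3 b1 b2 b3. pose proof (inter_2_6 P a1 b1) as hP; pose proof (inter_2_6 Q a2 b2) as hQ. subst; congruence. Qed.
Lemma inter_3_4 x : Vset3 x -> Vset4 x -> x = (mkZ3 (1) (0) (0)).
Proof. unfold Vset3, Vset4. intros [ -> | [ -> | -> ] ] [H|[H|H]]; try discriminate H; auto. Qed.
Lemma pex_3_4 P Q R : P <> Q -> P <> R -> Q <> R -> Vset3 P -> Vset3 Q -> Vset3 R -> Vset4 P -> Vset4 Q -> Vset4 R -> False.
Proof. intros n1 n2 n3 a1 a2 a3 b1 b2 b3. pose proof (inter_3_4 P a1 b1) as hP; pose proof (inter_3_4 Q a2 b2) as hQ. subst; congruence. Qed.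
Lemma inter_3_5 x : Vset3 x -> Vset5 x -> x = (mkZ3 (1) (0) (0)).
Proof. unfold Vset3, Vset5. intros [ -> | [ -> | -> ] ] [H|[H|H]]; try discriminate H; auto. Qed.
Lemma pex_3_5 P Q R : P <> Q -> P <> R -> Q <> R -> Vset3 P -> Vset3 Q -> Vset3 R -> Vset5 P -> Vset5 Q -> Vset5 R -> False.
Proof. intros n1 n2 n3 a1 a2 a3 b1 b2 b3. pose proof (inter_3_5 P a1 b1) as hP; pose proof (inter_3_5 Q a2 b2) as hQ. subst; congruence. Qed.
Lemma inter_3_6 x : Vset3 x -> Vset6 x -> x = (mkZ3 (5) (-1) (-2)) \/ x = (mkZ3 (1) (0) (0)).
Proof. unfold Vset3, Vset6. intros [ -> | [ -> | -> ] ] [H|[H|H]]; try discriminate H; auto. Qed.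
Lemma pex_3_6 P Q R : P <> Q -> P <> R -> Q <> R -> Vset3 P -> Vset3 Q -> Vset3 R -> Vset6 P -> Vset6 Q -> Vset6 R -> False.
Proof. intros n1 n2 n3 a1 a2 a3 b1 b2 b3. destruct (inter_3_6 P a1 b1) as [hP|hP]; destruct (inter_3_6 Q a2 b2) as [hQ|hQ]; destruct (inter_3_6 R a3 b3) as [hR|hR]; subst; congruence. Qed.
Lemma inter_4_5 x : Vset4 x -> Vset5 x -> x = (mkZ3 (0) (-1) (1)) \/ x = (mkZ3 (1) (0) (0)).
Proof. unfold Vset4, Vset5. intros [ -> | [ -> | -> ] ] [H|[H|H]]; try discriminate H; auto. Qed.
Lemma pex_4_5 P Q R : P <> Q -> P <> R -> Q <> R -> Vset4 P -> Vset4 Q -> Vset4 R -> Vset5 P -> Vset5 Q -> Vset5 R -> False.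
Proof. intros n1 n2 n3 a1 a2 a3 b1 b2 b3. destruct (inter_4_5 P a1 b1) as [hP|hP]; destruct (inter_4_5 Q a2 b2) as [hQ|hQ]; destruct (inter_4_5 R a3 b3) as [hR|hR]; subst; congruence. Qed.
Lemma inter_4_6 x : Vset4 x -> Vset6 x -> x = (mkZ3 (1) (0) (0)).
Proof. unfold Vset4, Vset6. intros [ -> | [ -> | -> ] ] [H|[H|H]]; try discriminate H; auto. Qed.
Lemma pex_4_6 P Q R : P <> Q -> P <> R -> Q <> R -> Vset4 P -> Vset4 Q -> Vset4 R -> Vset6 P -> Vset6 Q -> Vset6 R -> False.
Proof. intros n1 n2 n3 a1 a2 a3 b1 b2 b3. pose proof (inter_4_6 P a1 b1) as hP; pose proof (inter_4_6 Q a2 b2) as hQ. subst; congruence. Qed.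
Lemma inter_5_6 x : Vset5 x -> Vset6 x -> x = (mkZ3 (3) (-1) (-1)) \/ x = (mkZ3 (1) (0) (0)).
Proof. unfold Vset5, Vset6. intros [ -> | [ -> | -> ] ] [H|[H|H]]; try discriminate H; auto. Qed.
Lemma pex_5_6 P Q R : P <> Q -> P <> R -> Q <> R -> Vset5 P -> Vset5 Q -> Vset5 R -> Vset6 P -> Vset6 Q -> Vset6 R -> False.
Proof. intros n1 n2 n3 a1 a2 a3 b1 b2 b3. destruct (inter_5_6 P a1 b1) as [hP|hP]; destruct (inter_5_6 Q a2 b2) as [hQ|hQ]; destruct (inter_5_6 R a3 b3) as [hR|hR]; subst; congruence. Qed.

Ltac zr g := apply IZR_le in g; repeat rewrite ?plus_IZR, ?opp_IZR, ?mult_IZR, ?minus_IZR in g.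

Lemma decomp k :
 (dotz k e3 <= dotz k al)%Z -> (dotz k e3 <= dotz k be)%Z -> (dotz k e3 <= dotz k ab)%Z ->
 (dotz k e3 <= dotz k ali)%Z -> (dotz k e3 <= dotz k bei)%Z -> (dotz k e3 <= dotz k abi)%Z ->
 exists l1 l2 l3 l4 l5 l6, 0<=l1 /\ 0<=l2 /\ 0<=l3 /\ 0<=l4 /\ 0<=l5 /\ 0<=l6 /\
  forall x, IZR (dotz k x) = l1*IZR(dotz nf1 x) + l2*IZR(dotz nf2 x) + l3*IZR(dotz nf3 x)
                           + l4*IZR(dotz nf4 x) + l5*IZR(dotz nf5 x) + l6*IZR(dotz nf6 x).
Proof.
  destruct k as [k0 k1 k2]. unfold dotz, e3, al, be, ab, ali, bei, abi; cbn [z0 z1 z2].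
  intros h1 h2 h3 h4 h5 h6.
  assert (g1 : (0 <= -k0 + k2)%Z) by lia.
  assert (g2 : (0 <= k0 + k1)%Z) by lia.
  assert (g3 : (0 <= 2*k1 + k2)%Z) by lia.
  assert (g4 : (0 <= 4*k0 - k1 - 2*k2)%Z) by lia.
  assert (g5 : (0 <= -k0 - k1 + k2)%Z) by lia.
  assert (g6 : (0 <= 2*k0 - k1 - k2)%Z) by lia.
  zr g1; zr g2; zr g3; zr g4; zr g5; zr g6.
  set (K0 := IZR k0) in *; set (K1 := IZR k1) in *; set (K2 := IZR k2) in *.
  assert (Hx : forall l1 l2 l3 l4 l5 l6,
     K0 = 2*l1 + l2 + 2*l3 + l4 + 2*l5 + l6 ->
     K1 = -l1 - l2 - 2*l3 + 0*l4 + l5 + 0*l6 ->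
     K2 = 2*l1 + 2*l2 + 5*l3 + l4 + 3*l5 + 2*l6 ->
     forall x, IZR (k0 * z0 x + k1 * z1 x + k2 * z2 x) =
       l1*IZR(dotz nf1 x) + l2*IZR(dotz nf2 x) + l3*IZR(dotz nf3 x)
     + l4*IZR(dotz nf4 x) + l5*IZR(dotz nf5 x) + l6*IZR(dotz nf6 x)).
  { intros l1 l2 l3 l4 l5 l6 e0 e1 e2 x. unfold dotz, nf1, nf2, nf3, nf4, nf5, nf6; cbn [z0 z1 z2].
    repeat rewrite ?plus_IZR, ?mult_IZR. fold K0 K1 K2. rewrite e0, e1, e2. ring. }
  set (q3 := -K0 - 6*K1 - 2*K2). set (q6 := -2*K0 - 2*K1 + K2). set (q5 := -5*K0 - 2*K1 + 4*K2).
  destruct (Rle_lt_dec 0 q3).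
  { exists (K0+K1), q3, (2*K1+K2), 0, 0, 0.
    repeat split; try lra. apply Hx; unfold q3; lra. }
  destruct (Rle_lt_dec 0 q6).
  { exists ((4*K0 - K1 - 2*K2)/5), 0, (q6/5), 0, 0, (-q3/5).
    repeat split; try lra. apply Hx; unfold q3, q6; lra. }
  destruct (Rle_lt_dec 0 q5).
  { exists ((2*K0 - K1 - K2)/3), 0, 0, 0, (-q6/3), (q5/3).
    repeat split; try lra. apply Hx; unfold q3, q5, q6; lra. }
  { exists (-K0 - K1 + K2), 0, 0, (-q5), (K2 - K0), 0.
    repeat split; try lra. apply Hx; unfold q5; lra. }
Qed.

Lemma nfe3 : dotz nf1 e3 = 2%Z /\ dotz nf2 e3 = 1%Z /\ dotz nf3 e3 = 2%Z /\
  dotz nf4 e3 = 1%Z /\ dotz nf5 e3 = 2%Z /\ dotz nf6 e3 = 1%Z.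
Proof. repeat split; reflexivity. Qed.

Lemma zero_or l (v : Z) (n : Z3) (V : Z3 -> Prop) X :
  0 <= l -> (forall x, TPz x -> (v <= dotz n x)%Z /\ (dotz n x = v -> V x)) -> TPz X ->
  l * (IZR (dotz n X) - IZR v) = 0 -> l = 0 \/ (0 < l /\ V X).
Proof.
  intros hl HI hX h. destruct (HI X hX) as [_ h2].
  apply Rmult_integral in h. destruct h as [h|h]; [left; exact h|].
  destruct (Req_dec l 0) as [e|e]; [left; exact e| right; split; [lra|]].
  apply h2. apply eq_IZR. lra.
Qed.

Lemma prod_nonneg l (v : Z) (n : Z3) (V : Z3 -> Prop) X :
  0 <= l -> (forall x, TPz x -> (v <= dotz n x)%Z /\ (dotz n x = v -> V x)) -> TPz X ->
  0 <= l * (IZR (dotz n X) - IZR v).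
Proof.
  intros hl HI hX. destruct (HI X hX) as [h1 _]. apply IZR_le in h1.
  apply Rmult_le_pos; lra.
Qed.

Lemma point_info k l1 l2 l3 l4 l5 l6 X :
  0<=l1 -> 0<=l2 -> 0<=l3 -> 0<=l4 -> 0<=l5 -> 0<=l6 ->
  (forall x, IZR (dotz k x) = l1*IZR(dotz nf1 x) + l2*IZR(dotz nf2 x) + l3*IZR(dotz nf3 x)
                           + l4*IZR(dotz nf4 x) + l5*IZR(dotz nf5 x) + l6*IZR(dotz nf6 x)) ->
  TPz X -> dotz k X = dotz k e3 ->
  (l1 = 0 \/ (0 < l1 /\ Vset1 X)) /\ (l2 = 0 \/ (0 < l2 /\ Vset2 X)) /\ (l3 = 0 \/ (0 < l3 /\ Vset3 X)) /\
  (l4 = 0 \/ (0 < l4 /\ Vset4 X)) /\ (l5 = 0 \/ (0 < l5 /\ Vset5 X)) /\ (l6 = 0 \/ (0 < l6 /\ Vset6 X)).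
Proof.
  intros p1 p2 p3 p4 p5 p6 Hk hX hE.
  assert (E := f_equal IZR hE). rewrite (Hk X), (Hk e3) in E.
  destruct nfe3 as [n1 [n2 [n3 [n4 [n5 n6]]]]]. rewrite n1, n2, n3, n4, n5, n6 in E.
  pose proof (prod_nonneg l1 2 nf1 Vset1 X p1 I1_1 hX).
  pose proof (prod_nonneg l2 1 nf2 Vset2 X p2 I1_2 hX).
  pose proof (prod_nonneg l3 2 nf3 Vset3 X p3 I1_3 hX).
  pose proof (prod_nonneg l4 1 nf4 Vset4 X p4 I1_4 hX).
  pose proof (prod_nonneg l5 2 nf5 Vset5 X p5 I1_5 hX).
  pose proof (prod_nonneg l6 1 nf6 Vset6 X p6 I1_6 hX).
  repeat split.
  - apply (zero_or l1 2 nf1 Vset1 X p1 I1_1 hX). lra.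
  - apply (zero_or l2 1 nf2 Vset2 X p2 I1_2 hX). lra.
  - apply (zero_or l3 2 nf3 Vset3 X p3 I1_3 hX). lra.
  - apply (zero_or l4 1 nf4 Vset4 X p4 I1_4 hX). lra.
  - apply (zero_or l5 2 nf5 Vset5 X p5 I1_5 hX). lra.
  - apply (zero_or l6 1 nf6 Vset6 X p6 I1_6 hX). lra.
Qed.

Lemma comb3 (l : R) (C1 C2 C3 : Prop) :
  (l = 0 \/ (0 < l /\ C1)) -> (l = 0 \/ (0 < l /\ C2)) -> (l = 0 \/ (0 < l /\ C3)) ->
  l = 0 \/ (0 < l /\ C1 /\ C2 /\ C3).
Proof.
  intros [h|[h c1]] [h'|[_ c2]] [h''|[_ c3]]; try (left; assumption); try (exfalso; lra).
  right; auto.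
Qed.

Definition propto (k n : Z3) := exists l, 0 < l /\ forall x, IZR (dotz k x) = l * IZR (dotz n x).

Lemma face_struct k P Q R :
 (dotz k e3 <= dotz k al)%Z -> (dotz k e3 <= dotz k be)%Z -> (dotz k e3 <= dotz k ab)%Z ->
 (dotz k e3 <= dotz k ali)%Z -> (dotz k e3 <= dotz k bei)%Z -> (dotz k e3 <= dotz k abi)%Z ->
 TPz P -> TPz Q -> TPz R ->
 dotz k P = dotz k e3 -> dotz k Q = dotz k e3 -> dotz k R = dotz k e3 ->
 P <> Q -> P <> R -> Q <> R -> k <> mkZ3 0 0 0 ->
 propto k nf1 \/ propto k nf2 \/ propto k nf3 \/ propto k nf4 \/ propto k nf5 \/ propto k nf6.
Proof.
  intros h1 h2 h3 h4 h5 h6 tP tQ tR eP eQ eR nPQ nPR nQR nk.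
  destruct (decomp k h1 h2 h3 h4 h5 h6) as [l1 [l2 [l3 [l4 [l5 [l6 [p1 [p2 [p3 [p4 [p5 [p6 Hk]]]]]]]]]]]].
  destruct (point_info k l1 l2 l3 l4 l5 l6 P p1 p2 p3 p4 p5 p6 Hk tP eP) as [a1 [a2 [a3 [a4 [a5 a6]]]]].
  destruct (point_info k l1 l2 l3 l4 l5 l6 Q p1 p2 p3 p4 p5 p6 Hk tQ eQ) as [b1 [b2 [b3 [b4 [b5 b6]]]]].
  destruct (point_info k l1 l2 l3 l4 l5 l6 R p1 p2 p3 p4 p5 p6 Hk tR eR) as [c1 [c2 [c3 [c4 [c5 c6]]]]].
  pose proof (comb3 _ _ _ _ a1 b1 c1) as d1. pose proof (comb3 _ _ _ _ a2 b2 c2) as d2.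
  pose proof (comb3 _ _ _ _ a3 b3 c3) as d3. pose proof (comb3 _ _ _ _ a4 b4 c4) as d4.
  pose proof (comb3 _ _ _ _ a5 b5 c5) as d5. pose proof (comb3 _ _ _ _ a6 b6 c6) as d6.
  clear a1 a2 a3 a4 a5 a6 b1 b2 b3 b4 b5 b6 c1 c2 c3 c4 c5 c6.
  assert (knz : ~ (forall x, IZR (dotz k x) = 0)).
  { intro H0. apply nk. destruct k as [k0 k1 k2].
    assert (H1 := H0 e3). assert (H2 := H0 (mkZ3 0 1 0)). assert (H3 := H0 (mkZ3 0 0 1)).
    unfold dotz, e3 in H1, H2, H3; cbn [z0 z1 z2] in H1, H2, H3.
    apply eq_IZR in H1, H2, H3. apply Z3_eq; lia. }
  destruct d1 as [z1|[q1 [v1 [w1 u1]]]]; destruct d2 as [z2|[q2 [v2 [w2 u2]]]];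
  destruct d3 as [z3|[q3 [v3 [w3 u3]]]]; destruct d4 as [z4|[q4 [v4 [w4 u4]]]];
  destruct d5 as [z5|[q5 [v5 [w5 u5]]]]; destruct d6 as [z6|[q6 [v6 [w6 u6]]]];
  try (exfalso; first
    [ apply (pex_1_2 P Q R); assumption | apply (pex_1_3 P Q R); assumption
    | apply (pex_1_4 P Q R); assumption | apply (pex_1_5 P Q R); assumption
    | apply (pex_1_6 P Q R); assumption | apply (pex_2_3 P Q R); assumption
    | apply (pex_2_4 P Q R); assumption | apply (pex_2_5 P Q R); assumption
    | apply (pex_2_6 P Q R); assumption | apply (pex_3_4 P Q R); assumption
    | apply (pex_3_5 P Q R); assumption | apply (pex_3_6 P Q R); assumption
    | apply (pex_4_5 P Q R); assumption | apply (pex_4_6 P Q R); assumption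
    | apply (pex_5_6 P Q R); assumption ]);
  subst;
  try (exfalso; apply knz; intro x; rewrite Hk; ring);
  first
   [ left; exists l1; split; [assumption| intro x; rewrite Hk; ring]
   | right; left; exists l2; split; [assumption| intro x; rewrite Hk; ring]
   | right; right; left; exists l3; split; [assumption| intro x; rewrite Hk; ring]
   | right; right; right; left; exists l4; split; [assumption| intro x; rewrite Hk; ring]
   | right; right; right; right; left; exists l5; split; [assumption| intro x; rewrite Hk; ring]
   | right; right; right; right; right; exists l6; split; [assumption| intro x; rewrite Hk; ring] ].
Qed.

Lemma decomp_ge k :
 (dotz k e3 <= dotz k al)%Z -> (dotz k e3 <= dotz k be)%Z -> (dotz k e3 <= dotz k ab)%Z ->
 (dotz k e3 <= dotz k ali)%Z -> (dotz k e3 <= dotz k bei)%Z -> (dotz k e3 <= dotz k abi)%Z ->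
 forall x, TPz x -> (dotz k e3 <= dotz k x)%Z.
Proof.
  intros h1 h2 h3 h4 h5 h6 x hx.
  destruct (decomp k h1 h2 h3 h4 h5 h6) as [l1 [l2 [l3 [l4 [l5 [l6 [p1 [p2 [p3 [p4 [p5 [p6 Hk]]]]]]]]]]]].
  apply le_IZR. rewrite (Hk x), (Hk e3).
  destruct nfe3 as [n1 [n2 [n3 [n4 [n5 n6]]]]]. rewrite n1, n2, n3, n4, n5, n6.
  pose proof (prod_nonneg l1 2 nf1 Vset1 x p1 I1_1 hx).
  pose proof (prod_nonneg l2 1 nf2 Vset2 x p2 I1_2 hx).
  pose proof (prod_nonneg l3 2 nf3 Vset3 x p3 I1_3 hx).
  pose proof (prod_nonneg l4 1 nf4 Vset4 x p4 I1_4 hx).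
  pose proof (prod_nonneg l5 2 nf5 Vset5 x p5 I1_5 hx).
  pose proof (prod_nonneg l6 1 nf6 Vset6 x p6 I1_6 hx).
  lra.
Qed.

Definition pointL (l : list (R*pt)) := fold_right (fun tp acc => padd (pscale (fst tp) (snd tp)) acc) pzero l.
Definition sumL (l : list (R*pt)) := fold_right (fun tp s => fst tp + s) 0 l.

Lemma pointL_cons t y l : pointL ((t,y)::l) = padd (pscale t y) (pointL l).
Proof. reflexivity. Qed.
Lemma sumL_cons t y l : sumL ((t,y)::l) = t + sumL l.
Proof. reflexivity. Qed.
Lemma pointL_nil : pointL nil = pzero. Proof. reflexivity. Qed.
Lemma sumL_nil : sumL nil = 0. Proof. reflexivity. Qed.
Ltac unL := repeat rewrite ?pointL_cons, ?sumL_cons, ?pointL_nil, ?sumL_nil.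

Lemma pt_eq a b c d e f : a = d -> b = e -> c = f -> Pt a b c = Pt d e f.
Proof. intros; subst; reflexivity. Qed.

Lemma lin_padd a x y : lin a (padd x y) = lin a x + lin a y.
Proof. unfold lin, padd; simpl; ring. Qed.
Lemma lin_pscale a t x : lin a (pscale t x) = t * lin a x.
Proof. unfold lin, pscale; simpl; ring. Qed.
Lemma lin_pzero a : lin a pzero = 0.
Proof. unfold lin, pzero; simpl; ring. Qed.

Lemma conv_ge_list (S : pt -> Prop) a c l :
  Forall (fun tp => 0 <= fst tp /\ S (snd tp)) l -> (forall y, S y -> c <= lin a y) ->
  c * sumL l <= lin a (pointL l).
Proof.
  intros HF Hc. induction HF as [|[t y] l [h1 h2] HF IH]; unL; cbn [fst snd] in *.
  - rewrite lin_pzero. lra.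
  - rewrite lin_padd, lin_pscale. specialize (Hc y h2).
    assert (t * c <= t * lin a y) by (apply Rmult_le_compat_l; lra). lra.
Qed.

Lemma conv_ge (S : pt -> Prop) a c x :
  (forall y, S y -> c <= lin a y) -> conv S x -> c <= lin a x.
Proof.
  intros Hc [l [HF [Hs Hx]]]. subst x. fold (pointL l).
  assert (H := conv_ge_list S a c l HF Hc). fold (sumL l) in Hs. rewrite Hs in H. lra.
Qed.

Lemma conv_face_list (S : pt -> Prop) a c l :
  Forall (fun tp => 0 <= fst tp /\ S (snd tp)) l -> (forall y, S y -> c <= lin a y) ->
  lin a (pointL l) = c * sumL l ->
  exists l', Forall (fun tp => 0 <= fst tp /\ (S (snd tp) /\ lin a (snd tp) = c)) l' /\
     sumL l' = sumL l /\ pointL l' = pointL l.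
Proof.
  intros HF Hc. induction HF as [|[t y] l [h1 h2] HF IH]; unL; cbn [fst snd] in *; intro He.
  - exists nil; repeat split; auto.
  - rewrite lin_padd, lin_pscale in He.
    assert (G := conv_ge_list S a c l HF Hc). assert (Hy := Hc y h2).
    assert (t * c <= t * lin a y) by (apply Rmult_le_compat_l; lra).
    destruct IH as [l' [HF' [Hs' Hp']]]; [lra|].
    destruct (Req_dec t 0) as [ht|ht].
    + exists l'. repeat split; auto.
      * rewrite Hs', ht. ring.
      * rewrite Hp', ht. destruct (pointL l). unfold padd, pscale; simpl. apply pt_eq; ring.
    + exists ((t,y)::l'). repeat split; simpl.
      * constructor; [|exact HF']. simpl. repeat split; auto.
        assert (t * (lin a y - c) = 0) by lra.
        apply Rmult_integral in H0. destruct H0; lra.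
      * rewrite Hs'; reflexivity.
      * rewrite Hp'; reflexivity.
Qed.

Lemma pmul_fold u l : pmul u (pointL l) = pointL (map (fun tp => (fst tp, pmul u (snd tp))) l).
Proof.
  induction l as [|[t z] l IH]; simpl.
  - unfold pmul, pzero; simpl. apply pt_eq; ring.
  - rewrite <- IH. destruct u, z, (pointL l). unfold pmul, padd, pscale; simpl. apply pt_eq; ring.
Qed.

Lemma sumL_map f l : sumL (map (fun tp => (fst tp, f (snd tp))) l) = sumL l.
Proof. induction l as [|[t z] l IH]; simpl; [reflexivity| rewrite IH; reflexivity]. Qed.

Lemma lin_const_list a c l :
  Forall (fun tp => lin a (snd tp) = c) l -> lin a (pointL l) = c * sumL l.
Proof.
  intros HF. induction HF as [|[t y] l h HF IH]; unL; cbn [fst snd] in *.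
  - rewrite lin_pzero; ring.
  - rewrite lin_padd, lin_pscale, IH, h. ring.
Qed.

Lemma conv_mul (u : pt) (T : pt -> Prop) a c :
  (forall y, O_plus y -> c <= lin a y) ->
  (forall y, O_plus y -> (lin a y = c <-> exists z, T z /\ y = pmul u z)) ->
  (forall z, T z -> O_plus (pmul u z)) ->
  forall y, (conv O_plus y /\ lin a y = c) <-> mul_set u (conv T) y.
Proof.
  intros Hc Hf HT y. split.
  - intros [[l [HF [Hs Hy]]] Hl]. fold (pointL l) in Hy. fold (sumL l) in Hs.
    destruct (conv_face_list O_plus a c l HF Hc) as [l' [HF' [Hs' Hp']]].
    { rewrite <- Hy, Hs, Hl. ring. }
    assert (G : exists l'', Forall (fun tp => 0 <= fst tp /\ T (snd tp)) l'' /\ sumL l'' = sumL l' /\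
               pmul u (pointL l'') = pointL l').
    { clear -HF' Hf. induction HF' as [|[t z] l' [h1 [h2 h3]] HF IH].
      - exists nil. repeat split; auto. unfold pmul, pzero; simpl. apply pt_eq; ring.
      - destruct IH as [l'' [F'' [S'' P'']]].
        destruct (proj1 (Hf z h2) h3) as [x [Tx ->]].
        exists ((t,x)::l''). repeat split; simpl.
        + constructor; auto.
        + rewrite S''; reflexivity.
        + rewrite <- P''. destruct u, x, (pointL l''). unfold pmul, padd, pscale; simpl. apply pt_eq; ring. }
    destruct G as [l'' [F'' [S'' P'']]].
    exists (pointL l''). split.
    + exists l''. split; [exact F''|]. split; [fold (sumL l''); congruence| reflexivity].
    + rewrite P'', Hp'. exact Hy.
  - intros [x [[l [HF [Hs Hx]]] Hy]]. fold (pointL l) in Hx. fold (sumL l) in Hs.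
    subst y x. rewrite pmul_fold. split.
    + exists (map (fun tp => (fst tp, pmul u (snd tp))) l). split.
      * rewrite Forall_map. eapply Forall_impl; [|exact HF]. simpl. intros [t z] [h1 h2]; split; auto.
      * split; [fold (sumL (map (fun tp => (fst tp, pmul u (snd tp))) l)); rewrite sumL_map; exact Hs| reflexivity].
    + rewrite lin_const_list with (c := c).
      * rewrite sumL_map, Hs; ring.
      * rewrite Forall_map. eapply Forall_impl; [|exact HF]. simpl. intros [t z] [h1 h2].
        apply (Hf (pmul u z) (HT z h2)). exists z; auto.
Qed.

Lemma pt_ext x y : px x = px y -> py x = py y -> pz x = pz y -> x = y.
Proof. destruct x, y; simpl; intros; subst; reflexivity. Qed.

Definition onLine x0 d x := exists s, x = padd x0 (pscale s d).

Lemma conv_line (X : pt -> Prop) x0 d p :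
  (forall x, X x -> onLine x0 d x) -> conv X p -> onLine x0 d p.
Proof.
  intros HL [l [HF [Hs Hp]]]. fold (pointL l) in Hp. fold (sumL l) in Hs.
  assert (G : exists s, pointL l = padd (pscale (sumL l) x0) (pscale s d)).
  { clear Hs Hp. induction HF as [|[t y] l [h1 h2] HF IH]; unL; cbn [fst snd] in *.
    - exists 0. apply pt_ext; unfold pzero, padd, pscale; simpl; ring.
    - destruct IH as [s Hs]. destruct (HL y h2) as [s' ->]. exists (t*s' + s). rewrite Hs.
      apply pt_ext; unfold padd, pscale; simpl; ring. }
  destruct G as [s G]. exists s. rewrite Hp, G, Hs. apply pt_ext; unfold padd, pscale; simpl; ring.
Qed.

Lemma line_dep x0 d p q r : onLine x0 d p -> onLine x0 d q -> onLine x0 d r -> ~ aff_indep3 p q r.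
Proof.
  intros [sp ->] [sq ->] [sr ->] H.
  destruct (Req_dec sq sp) as [e|e].
  - destruct (H 1 0) as [h _]; [|lra]. subst sq.
    apply pt_ext; unfold padd, pscale, psub, pzero; simpl; ring.
  - destruct (H (sr - sp) (-(sq - sp))) as [_ h]; [|apply e; lra].
    apply pt_ext; unfold padd, pscale, psub, pzero; simpl; ring.
Qed.

Lemma extract3 (X : pt -> Prop) p q r :
  conv X p -> conv X q -> conv X r -> aff_indep3 p q r ->
  exists P Q R, X P /\ X Q /\ X R /\ aff_indep3 P Q R.
Proof.
  intros Cp Cq Cr Hi. apply NNPP; intro Hn.
  assert (Hd : forall P Q R, X P -> X Q -> X R -> ~ aff_indep3 P Q R).
  { intros P Q R a b c h. apply Hn. exists P, Q, R; auto. }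
  assert (Hx0 : exists x0, X x0).
  { destruct Cp as [l [HF [Hs _]]]. destruct l as [|[t y] l].
    - simpl in Hs. lra.
    - inversion HF; subst. exists y. apply H1. }
  destruct Hx0 as [x0 X0].
  assert (HL : exists d, forall x, X x -> onLine x0 d x).
  { destruct (classic (exists x1, X x1 /\ x1 <> x0)) as [[x1 [X1 n1]]|Hno].
    - exists (psub x1 x0). intros x Xx.
      assert (Hn2 := Hd x0 x1 x X0 X1 Xx). unfold aff_indep3 in Hn2.
      apply not_all_ex_not in Hn2. destruct Hn2 as [s Hn2].
      apply not_all_ex_not in Hn2. destruct Hn2 as [t Hn2].
      apply imply_to_and in Hn2. destruct Hn2 as [Heq Hnz].
      assert (e1 := f_equal px Heq). assert (e2 := f_equal py Heq). assert (e3 := f_equal pz Heq).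
      unfold padd, pscale, psub, pzero in e1, e2, e3; simpl in e1, e2, e3.
      destruct (Req_dec t 0) as [ht|ht].
      + exfalso. subst t. apply n1.
        assert (hs : s <> 0) by (intro; apply Hnz; auto).
        apply pt_ext.
        * apply (Rmult_eq_reg_l s); [|exact hs]. lra.
        * apply (Rmult_eq_reg_l s); [|exact hs]. lra.
        * apply (Rmult_eq_reg_l s); [|exact hs]. lra.
      + exists (- s / t). apply pt_ext; unfold padd, pscale, psub; simpl; field_simplify; try exact ht.
        * apply (Rmult_eq_reg_l t); [|exact ht]. field_simplify; [|exact ht]. lra.
        * apply (Rmult_eq_reg_l t); [|exact ht]. field_simplify; [|exact ht]. lra.
        * apply (Rmult_eq_reg_l t); [|exact ht]. field_simplify; [|exact ht]. lra.
    - exists pzero. intros x Xx. exists 0.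
      assert (x = x0) by (apply NNPP; intro h; apply Hno; exists x; auto).
      subst. apply pt_ext; unfold padd, pscale, pzero; simpl; ring. }
  destruct HL as [d HL].
  apply (line_dep x0 d p q r); [apply (conv_line X)|apply (conv_line X)|apply (conv_line X)|]; auto.
Qed.

Lemma th_dist : theta 1 <> theta 2 /\ theta 1 <> theta 3 /\ theta 2 <> theta 3.
Proof. generalize tb1 tb2 tb3; intros; repeat split; lra. Qed.

Lemma ev_inj x0 x1 x2 :
  ev (theta 1) x0 x1 x2 = 0 -> ev (theta 2) x0 x1 x2 = 0 -> ev (theta 3) x0 x1 x2 = 0 ->
  x0 = 0 /\ x1 = 0 /\ x2 = 0.
Proof.
  destruct th_dist as [d12 [d13 d23]].
  set (t1 := theta 1) in *; set (t2 := theta 2) in *; set (t3 := theta 3) in *.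
  unfold ev. intros e1 e2 e3.
  assert (A : (t1 - t2) * (x1 + x2*(t1+t2)) = 0) by (rewrite <- (Rminus_diag_eq _ _ (eq_trans e1 (eq_sym e2))); ring).
  assert (B : (t1 - t3) * (x1 + x2*(t1+t3)) = 0) by (rewrite <- (Rminus_diag_eq _ _ (eq_trans e1 (eq_sym e3))); ring).
  apply Rmult_integral in A. destruct A as [A|A]; [exfalso; apply d12; lra|].
  apply Rmult_integral in B. destruct B as [B|B]; [exfalso; apply d13; lra|].
  assert (C : x2 * (t2 - t3) = 0) by lra.
  apply Rmult_integral in C. destruct C as [C|C]; [|exfalso; apply d23; lra].
  subst x2. assert (x1 = 0) by lra. subst x1. split; [lra|split; reflexivity].
Qed.

Lemma lin_nz (a : pt) : a <> pzero ->
  ~ (lin a (Er 1 0 0) = 0 /\ lin a (Er 0 1 0) = 0 /\ lin a (Er 0 0 1) = 0).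
Proof.
  intros Ha [L0 [L1 L2]]. apply Ha. destruct th_dist as [d12 [d13 d23]].
  destruct a as [a1 a2 a3]. unfold lin, Er, ev in *; cbn [px py pz] in *.
  set (t1 := theta 1) in *; set (t2 := theta 2) in *; set (t3 := theta 3) in *.
  assert (E1 : a1 * ((t1 - t2) * (t1 - t3)) = 0).
  { transitivity ((a1 * (0 + 0 * t1 + 1 * t1 ^ 2) + a2 * (0 + 0 * t2 + 1 * t2 ^ 2) + a3 * (0 + 0 * t3 + 1 * t3 ^ 2))
      - (t2+t3) * (a1 * (0 + 1 * t1 + 0 * t1 ^ 2) + a2 * (0 + 1 * t2 + 0 * t2 ^ 2) + a3 * (0 + 1 * t3 + 0 * t3 ^ 2))
      + t2*t3 * (a1 * (1 + 0 * t1 + 0 * t1 ^ 2) + a2 * (1 + 0 * t2 + 0 * t2 ^ 2) + a3 * (1 + 0 * t3 + 0 * t3 ^ 2))).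
    - ring.
    - rewrite L0, L1, L2. ring. }
  assert (E2 : a2 * ((t2 - t1) * (t2 - t3)) = 0).
  { transitivity ((a1 * (0 + 0 * t1 + 1 * t1 ^ 2) + a2 * (0 + 0 * t2 + 1 * t2 ^ 2) + a3 * (0 + 0 * t3 + 1 * t3 ^ 2))
      - (t1+t3) * (a1 * (0 + 1 * t1 + 0 * t1 ^ 2) + a2 * (0 + 1 * t2 + 0 * t2 ^ 2) + a3 * (0 + 1 * t3 + 0 * t3 ^ 2))
      + t1*t3 * (a1 * (1 + 0 * t1 + 0 * t1 ^ 2) + a2 * (1 + 0 * t2 + 0 * t2 ^ 2) + a3 * (1 + 0 * t3 + 0 * t3 ^ 2))).
    - ring.
    - rewrite L0, L1, L2. ring. }
  assert (E3 : a3 * ((t3 - t1) * (t3 - t2)) = 0).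
  { transitivity ((a1 * (0 + 0 * t1 + 1 * t1 ^ 2) + a2 * (0 + 0 * t2 + 1 * t2 ^ 2) + a3 * (0 + 0 * t3 + 1 * t3 ^ 2))
      - (t1+t2) * (a1 * (0 + 1 * t1 + 0 * t1 ^ 2) + a2 * (0 + 1 * t2 + 0 * t2 ^ 2) + a3 * (0 + 1 * t3 + 0 * t3 ^ 2))
      + t1*t2 * (a1 * (1 + 0 * t1 + 0 * t1 ^ 2) + a2 * (1 + 0 * t2 + 0 * t2 ^ 2) + a3 * (1 + 0 * t3 + 0 * t3 ^ 2))).
    - ring.
    - rewrite L0, L1, L2. ring. }
  assert (n1 : (t1 - t2) * (t1 - t3) <> 0) by (apply Rmult_integral_contrapositive; split; lra).
  assert (n2 : (t2 - t1) * (t2 - t3) <> 0) by (apply Rmult_integral_contrapositive; split; lra).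
  assert (n3 : (t3 - t1) * (t3 - t2) <> 0) by (apply Rmult_integral_contrapositive; split; lra).
  apply Rmult_integral in E1; apply Rmult_integral in E2; apply Rmult_integral in E3.
  destruct E1 as [E1|E1]; [|tauto]. destruct E2 as [E2|E2]; [|tauto]. destruct E3 as [E3|E3]; [|tauto].
  subst. reflexivity.
Qed.

Lemma Zmin_ex (P : Z -> Prop) (b : Z) :
  (exists z, P z) -> (forall z, P z -> (b <= z)%Z) -> exists z, P z /\ forall z', P z' -> (z <= z')%Z.
Proof.
  intros [z0 H0] Hb. apply NNPP. intro Hn.
  assert (Hall : forall n : nat, forall z, P z -> (b + Z.of_nat n <= z)%Z).
  { induction n as [|n IH].
    - intros z Hz. specialize (Hb z Hz). lia.
    - intros z Hz. pose proof (IH z Hz) as IHz.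
      destruct (Z.eq_dec z (b + Z.of_nat n)) as [e|e]; [|lia].
      exfalso. apply Hn. exists z. split; [exact Hz|]. intros z' Hz'. pose proof (IH z' Hz'). lia. }
  specialize (Hall (Z.to_nat (z0 - b + 1)) z0 H0). specialize (Hb z0 H0). lia.
Qed.

Lemma cross_prop (l0 l1 l2 u0 u1 u2 v0 v1 v2 : R) :
  let n0 := u1*v2 - u2*v1 in let n1 := u2*v0 - u0*v2 in let n2 := u0*v1 - u1*v0 in
  l0*u0 + l1*u1 + l2*u2 = 0 -> l0*v0 + l1*v1 + l2*v2 = 0 ->
  l0 * (n0*n0+n1*n1+n2*n2) = n0 * (l0*n0+l1*n1+l2*n2) /\
  l1 * (n0*n0+n1*n1+n2*n2) = n1 * (l0*n0+l1*n1+l2*n2) /\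
  l2 * (n0*n0+n1*n1+n2*n2) = n2 * (l0*n0+l1*n1+l2*n2).
Proof.
  intros n0 n1 n2 Hu Hv.
  set (lu := l0*u0 + l1*u1 + l2*u2) in *. set (lv := l0*v0 + l1*v1 + l2*v2) in *.
  (* n x (l x n) = lv (n x u) - lu (n x v) *)
  split; [|split].
  - transitivity (n0 * (l0*n0+l1*n1+l2*n2) + lv * (n1*u2 - n2*u1) - lu * (n1*v2 - n2*v1)).
    + unfold lv, lu, n0, n1, n2. ring.
    + rewrite Hu, Hv. ring.
  - transitivity (n1 * (l0*n0+l1*n1+l2*n2) + lv * (n2*u0 - n0*u2) - lu * (n2*v0 - n0*v2)).
    + unfold lv, lu, n0, n1, n2. ring.
    + rewrite Hu, Hv. ring.
  - transitivity (n2 * (l0*n0+l1*n1+l2*n2) + lv * (n0*u1 - n1*u0) - lu * (n0*v1 - n1*v0)).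
    + unfold lv, lu, n0, n1, n2. ring.
    + rewrite Hu, Hv. ring.
Qed.

Lemma in_O_embz y : in_O y -> exists x, y = embz x.
Proof. intros [a [b [c ->]]]. exists (mkZ3 a b c). reflexivity. Qed.

Lemma O_plus_embz x : TPz x -> O_plus (embz x).
Proof. intro h. split; [exists (z0 x), (z1 x), (z2 x); reflexivity| exact h]. Qed.

Lemma padd_embz a b c a' b' c' : padd (emb a b c) (emb a' b' c') = emb (a+a') (b+b') (c+c').
Proof. rewrite !emb_Er. unfold padd, Er, ev; cbn [px py pz]. rewrite !plus_IZR. apply pt_eq; ring. Qed.

Lemma tri1_char z : tri1 z <-> exists t, Vset1 t /\ z = embz t.
Proof.
  assert (E1 : one_O = embz (mkZ3 1 0 0)) by reflexivity.
  assert (E2 : pmul w_O w_O = embz (mkZ3 0 0 1)).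
  { unfold w_O. change (emb 0 1 0) with (embz (mkZ3 0 1 0)). rewrite embz_mul. reflexivity. }
  assert (E3 : pmul (padd w_O one_O) (padd w_O one_O) = embz (mkZ3 1 2 1)).
  { unfold w_O, one_O. rewrite padd_embz. change (emb (0+1) (1+0) (0+0)) with (embz (mkZ3 1 1 0)).
    rewrite embz_mul. reflexivity. }
  unfold tri1, Vset1. rewrite E3, E2, E1. split.
  - intros [h|[h|h]]; eexists; split; [left; reflexivity|exact h| right; left; reflexivity| exact h|right; right; reflexivity|exact h].
  - intros [t [[h|[h|h]] ->]]; subst t; auto.
Qed.

Lemma tri2_char z : tri2 z <-> exists t, Vset2 t /\ z = embz t.
Proof.
  assert (E1 : one_O = embz (mkZ3 1 0 0)) by reflexivity.
  assert (E2 : padd w_O (padd one_O one_O) = embz (mkZ3 2 1 0)).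
  { unfold w_O, one_O. rewrite !padd_embz. reflexivity. }
  assert (E3 : pmul (padd w_O one_O) (padd w_O one_O) = embz (mkZ3 1 2 1)).
  { unfold w_O, one_O. rewrite padd_embz. change (emb (0+1) (1+0) (0+0)) with (embz (mkZ3 1 1 0)).
    rewrite embz_mul. reflexivity. }
  unfold tri2, Vset2. rewrite E3, E2, E1. split.
  - intros [h|[h|h]]; eexists; split; [left; reflexivity|exact h| right; left; reflexivity| exact h|right; right; reflexivity|exact h].
  - intros [t [[h|[h|h]] ->]]; subst t; auto.
Qed.

Lemma conv_single (T : pt -> Prop) x : T x -> conv T x.
Proof.
  intro h. exists ((1,x)::nil). split; [constructor; [simpl; split; [lra|exact h]| constructor]|].
  split; [simpl; ring|]. simpl. destruct x; unfold padd, pscale, pzero; simpl. apply pt_eq; ring.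
Qed.

Lemma Oplus_conv y : O_plus y -> conv O_plus y.
Proof. apply conv_single. Qed.

Lemma backward (Tp : pt -> Prop) (W : Z3 -> Prop) (nf : Z3) (v : Z) (d0 d1 d2 : R) (t0 t1 t2 : Z3) :
  (forall z, Tp z <-> exists t, W t /\ z = embz t) ->
  W t0 -> W t1 -> W t2 ->
  (forall t, W t -> TPz t) ->
  (forall t, W t -> dotz nf t = v) ->
  (forall x, TPz x -> (v <= dotz nf x)%Z /\ (dotz nf x = v -> W x)) ->
  (forall x, lin (Er d0 d1 d2) (embz x) = IZR (dotz nf x)) ->
  0 < px (Er d0 d1 d2) ->
  (forall s t, s*(IZR(z0 t1) - IZR(z0 t0)) + t*(IZR(z0 t2) - IZR(z0 t0)) = 0 ->
               s*(IZR(z1 t1) - IZR(z1 t0)) + t*(IZR(z1 t2) - IZR(z1 t0)) = 0 ->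
               s*(IZR(z2 t1) - IZR(z2 t0)) + t*(IZR(z2 t2) - IZR(z2 t0)) = 0 -> s = 0 /\ t = 0) ->
  forall F u, unit_O u -> totally_positive u -> (forall x, F x <-> mul_set u (conv Tp) x) ->
  is_facet (conv O_plus) F.
Proof.
  intros HT W0 W1 W2 HWtp HWnf HI1 Hd Hdp Hind F u [Hu [V [HV HuV]]] Hpos HF.
  destruct (in_O_embz u Hu) as [xu Exu]. destruct (in_O_embz V HV) as [xv Exv].
  assert (c1 := f_equal px HuV). assert (c2 := f_equal py HuV). assert (c3 := f_equal pz HuV).
  unfold pmul in c1, c2, c3; cbn [px py pz] in c1, c2, c3.
  destruct Hpos as [u1 [u2 u3]].
  assert (HposV : totally_positive V) by (split; [|split]; nra).
  assert (TPxv : TPz xv) by (unfold TPz; rewrite <- Exv; exact HposV).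
  set (a := pmul (Er d0 d1 d2) V). set (c := IZR v).
  assert (Hlin : forall y, lin a y = lin (Er d0 d1 d2) (pmul V y)).
  { intro y. unfold a, lin, pmul; cbn [px py pz]. ring. }
  assert (HuVy : forall y, pmul u (pmul V y) = y).
  { intro y. apply pt_ext; unfold pmul; cbn [px py pz].
    - transitivity ((px u * px V) * px y); [ring| rewrite c1; ring].
    - transitivity ((py u * py V) * py y); [ring| rewrite c2; ring].
    - transitivity ((pz u * pz V) * pz y); [ring| rewrite c3; ring]. }
  assert (HVuy : forall y, pmul V (pmul u y) = y).
  { intro y. apply pt_ext; unfold pmul; cbn [px py pz].
    - transitivity ((px u * px V) * px y); [ring| rewrite c1; ring].
    - transitivity ((py u * py V) * py y); [ring| rewrite c2; ring].
    - transitivity ((pz u * pz V) * pz y); [ring| rewrite c3; ring]. }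
  assert (Hemb : forall x, lin a (embz x) = IZR (dotz nf (mulz xv x))).
  { intro x. rewrite Hlin, Exv, embz_mul. apply Hd. }
  assert (Hsup : forall y, O_plus y -> c <= lin a y).
  { intros y [Hy Hyp]. destruct (in_O_embz y Hy) as [x ->]. rewrite Hemb.
    assert (TPz (mulz xv x)) by (apply TPz_mul; auto).
    destruct (HI1 _ H) as [h _]. apply IZR_le. exact h. }
  assert (Hf : forall y, O_plus y -> (lin a y = c <-> exists z, Tp z /\ y = pmul u z)).
  { intros y [Hy Hyp]. destruct (in_O_embz y Hy) as [x ->]. rewrite Hemb. split.
    - intro h. apply eq_IZR in h.
      assert (TPz (mulz xv x)) by (apply TPz_mul; auto).
      destruct (HI1 _ H) as [_ h2]. specialize (h2 h).
      exists (embz (mulz xv x)). split.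
      + apply HT. exists (mulz xv x). auto.
      + rewrite <- embz_mul, <- Exv. symmetry. apply HuVy.
    - intros [z [Tz Ez]]. destruct (proj1 (HT z) Tz) as [t [Wt ->]].
      rewrite <- Hemb, Hlin, Ez, HVuy, Hd, HWnf by exact Wt. reflexivity. }
  assert (HT3 : forall z, Tp z -> O_plus (pmul u z)).
  { intros z Tz. destruct (proj1 (HT z) Tz) as [t [Wt ->]]. rewrite Exu, embz_mul.
    apply O_plus_embz. apply TPz_mul; auto. unfold TPz; rewrite <- Exu; split; auto. }
  exists a, c. split; [|split; [|split]].
  - intro h. assert (h1 := f_equal px h). unfold a, pmul, pzero in h1; cbn [px] in h1.
    assert (0 < px (Er d0 d1 d2) * px V) by (apply Rmult_lt_0_compat; [exact Hdp| apply HposV]). lra.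
  - intros x Hx. apply (conv_ge O_plus); auto.
  - intro x. rewrite HF. symmetry. apply conv_mul; auto.
  - exists (pmul u (embz t0)), (pmul u (embz t1)), (pmul u (embz t2)).
    split; [|split; [|split]].
    + apply HF. exists (embz t0). split; [apply conv_single, HT; eauto|reflexivity].
    + apply HF. exists (embz t1). split; [apply conv_single, HT; eauto|reflexivity].
    + apply HF. exists (embz t2). split; [apply conv_single, HT; eauto|reflexivity].
    + intros s t H.
      set (q0 := s*(IZR(z0 t1) - IZR(z0 t0)) + t*(IZR(z0 t2) - IZR(z0 t0))).
      set (q1 := s*(IZR(z1 t1) - IZR(z1 t0)) + t*(IZR(z1 t2) - IZR(z1 t0))).
      set (q2 := s*(IZR(z2 t1) - IZR(z2 t0)) + t*(IZR(z2 t2) - IZR(z2 t0))).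
      set (Y := padd (pscale s (psub (pmul u (embz t1)) (pmul u (embz t0)))) (pscale t (psub (pmul u (embz t2)) (pmul u (embz t0))))) in H.
      assert (g1 : px u * ev (theta 1) q0 q1 q2 = px Y).
      { unfold Y, psub, padd, pscale, pmul, embz; rewrite !emb_Er; unfold Er, ev, q0, q1, q2; cbn [px]; ring. }
      assert (g2 : py u * ev (theta 2) q0 q1 q2 = py Y).
      { unfold Y, psub, padd, pscale, pmul, embz; rewrite !emb_Er; unfold Er, ev, q0, q1, q2; cbn [py]; ring. }
      assert (g3 : pz u * ev (theta 3) q0 q1 q2 = pz Y).
      { unfold Y, psub, padd, pscale, pmul, embz; rewrite !emb_Er; unfold Er, ev, q0, q1, q2; cbn [pz]; ring. }
      rewrite H in g1, g2, g3. unfold pzero in g1, g2, g3; cbn [px py pz] in g1, g2, g3.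
      apply Rmult_integral in g1. destruct g1 as [g1|g1]; [lra|].
      apply Rmult_integral in g2. destruct g2 as [g2|g2]; [lra|].
      apply Rmult_integral in g3. destruct g3 as [g3|g3]; [lra|].
      destruct (ev_inj q0 q1 q2 g1 g2 g3) as [e0 [e1 e2]].
      apply Hind; assumption.
Qed.

Lemma Hd_gen (d0 d1 d2 : R) (nf : Z3) :
  IZR (z0 nf) = 3*d0 - d1 + 5*d2 -> IZR (z1 nf) = -d0 + 5*d1 - 4*d2 ->
  IZR (z2 nf) = 5*d0 - 4*d1 + 13*d2 ->
  forall x, lin (Er d0 d1 d2) (embz x) = IZR (dotz nf x).
Proof.
  intros e0 e1 e2 x. rewrite lin_embz. unfold dotz. rewrite !plus_IZR, !mult_IZR, e0, e1, e2. ring.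
Qed.

Lemma back1 : forall F u, unit_O u -> totally_positive u -> (forall x, F x <-> mul_set u (conv tri1) x) ->
  is_facet (conv O_plus) F.
Proof.
  apply (backward tri1 Vset1 nf1 2 (9/7) (-2/7) (-3/7) e3 al ab).
  - apply tri1_char.
  - left; reflexivity.
  - right; left; reflexivity.
  - right; right; reflexivity.
  - intros t [ -> | [ -> | -> ] ]; [apply TP_e3|apply TP_al|apply TP_ab].
  - intros t [ -> | [ -> | -> ] ]; reflexivity.
  - apply I1_1.
  - apply Hd_gen; simpl; lra.
  - unfold Er; cbn [px]. evpos.
  - unfold e3, al, ab; cbn [z0 z1 z2]. intros s t h0 h1 h2. lra.
Qed.

Lemma back2 : forall F u, unit_O u -> totally_positive u -> (forall x, F x <-> mul_set u (conv tri2) x) ->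
  is_facet (conv O_plus) F.
Proof.
  apply (backward tri2 Vset2 nf2 1 (2/7) (-1/7) 0 e3 be ab).
  - apply tri2_char.
  - left; reflexivity.
  - right; left; reflexivity.
  - right; right; reflexivity.
  - intros t [ -> | [ -> | -> ] ]; [apply TP_e3|apply TP_be|apply TP_ab].
  - intros t [ -> | [ -> | -> ] ]; reflexivity.
  - apply I1_2.
  - apply Hd_gen; simpl; lra.
  - unfold Er; cbn [px]. evpos.
  - unfold e3, be, ab; cbn [z0 z1 z2]. intros s t h0 h1 h2. lra.
Qed.

Lemma mulz_inv_l u v x : mulz u v = e3 -> mulz u (mulz v x) = x.
Proof. intro h. rewrite mulz_assoc, h. apply mulz_e3. Qed.
Lemma mulz_inv_r u v x : mulz u v = e3 -> mulz v (mulz u x) = x.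
Proof. intro h. rewrite mulz_assoc, (mulz_comm v u), h. apply mulz_e3. Qed.
Lemma mulz_e3_r x : mulz x e3 = x.
Proof. rewrite mulz_comm. apply mulz_e3. Qed.

Lemma embz_inj x y : embz x = embz y -> x = y.
Proof.
  intro h. assert (h1 := f_equal px h). assert (h2 := f_equal py h). assert (h3 := f_equal pz h).
  unfold embz in h1, h2, h3. rewrite !emb_Er in h1, h2, h3. unfold Er in h1, h2, h3; cbn [px py pz] in h1, h2, h3.
  destruct (ev_inj (IZR (z0 x) - IZR (z0 y)) (IZR (z1 x) - IZR (z1 y)) (IZR (z2 x) - IZR (z2 y)))
    as [e0 [e1 e2]].
  - unfold ev in *. rewrite <- (Rminus_diag_eq _ _ h1). ring.
  - unfold ev in *. rewrite <- (Rminus_diag_eq _ _ h2). ring.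
  - unfold ev in *. rewrite <- (Rminus_diag_eq _ _ h3). ring.
  - destruct x as [a b c], y as [a' b' c']; cbn [z0 z1 z2] in *.
    apply Z3_eq; apply eq_IZR; lra.
Qed.

Lemma Uz_unit_O x : Uz x -> unit_O (embz x) /\ totally_positive (embz x).
Proof.
  intros [Hx [y Hy]]. split; [|exact Hx]. split.
  - exists (z0 x), (z1 x), (z2 x). reflexivity.
  - exists (embz y). split; [exists (z0 y), (z1 y), (z2 y); reflexivity|].
    rewrite embz_mul, Hy. apply embz_e3.
Qed.

Lemma finish (Tp : pt -> Prop) (W Vs : Z3 -> Prop) (nf g : Z3) (v : Z) (F : pt -> Prop) a c
  (n' : Z3) (kap : R) (u0 v0 : Z3) :
  (forall x, F x <-> conv O_plus x /\ lin a x = c) ->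
  (forall y, O_plus y -> c <= lin a y) ->
  0 < kap -> (forall x, lin a (embz x) = kap * IZR (dotz n' x)) ->
  Uz u0 -> mulz u0 v0 = e3 -> c = kap * IZR (dotz n' u0) ->
  propto (kvec n' u0) nf ->
  (forall x, TPz x -> (v <= dotz nf x)%Z /\ (dotz nf x = v -> Vs x)) ->
  dotz nf e3 = v ->
  (forall x, Vs x -> dotz nf x = v) ->
  (forall x, Vs x <-> exists t, W t /\ x = mulz g t) ->
  (forall z, Tp z <-> exists t, W t /\ z = embz t) ->
  (forall t, W t -> TPz t) ->
  Uz g ->
  exists u, unit_O u /\ totally_positive u /\ forall x, F x <-> mul_set u (conv Tp) x.
Proof.
  intros HF Hsup Hkap Hlin Hu0 Huv Hc [lam [Hlam Hk]] HI1 Hnfe HVnf HVs HT HWtp Hg.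
  assert (TPv0 : TPz v0) by (eapply TPz_inv; [apply Hu0|exact Huv]).
  assert (Hn'x : forall x, IZR (dotz n' x) = lam * IZR (dotz nf (mulz v0 x))).
  { intro x. rewrite <- Hk, <- dot_mul, mulz_inv_l by exact Huv. reflexivity. }
  assert (Hn'u0 : IZR (dotz n' u0) = lam * IZR v).
  { rewrite <- Hnfe, <- Hk, <- dot_mul, mulz_e3_r. reflexivity. }
  assert (Key : forall x, dotz n' x = dotz n' u0 <-> dotz nf (mulz v0 x) = v).
  { intro x. split; intro h.
    - apply eq_IZR. apply (Rmult_eq_reg_l lam); [|lra]. rewrite <- Hn'x, <- Hn'u0, h. reflexivity.
    - apply eq_IZR. rewrite Hn'x, Hn'u0, h. reflexivity. }
  assert (Hlc : forall x, lin a (embz x) = c <-> dotz n' x = dotz n' u0).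
  { intro x. rewrite Hlin, Hc. split; intro h.
    - apply eq_IZR. apply (Rmult_eq_reg_l kap); [exact h|lra].
    - rewrite h. reflexivity. }
  assert (Ug : Uz (mulz u0 g)) by (apply Uz_mul; auto).
  destruct (Uz_unit_O _ Ug) as [HuO Hupos].
  exists (embz (mulz u0 g)). split; [exact HuO|]. split; [exact Hupos|].
  intro x. rewrite HF. apply conv_mul; auto.
  - intros y [Hy Hyp]. destruct (in_O_embz y Hy) as [x' ->]. rewrite Hlc, Key. split.
    + intro h. assert (TPz (mulz v0 x')) by (apply TPz_mul; auto).
      destruct (HI1 _ H) as [_ h2]. destruct (proj1 (HVs _) (h2 h)) as [t [Wt Et]].
      exists (embz t). split; [apply HT; eauto|].
      rewrite embz_mul, <- mulz_assoc, <- Et, mulz_inv_l by exact Huv. reflexivity.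
    + intros [z [Tz Ez]]. destruct (proj1 (HT z) Tz) as [t [Wt ->]].
      rewrite embz_mul in Ez.
      assert (x' = mulz (mulz u0 g) t).
      { apply embz_inj. exact Ez. }
      subst x'. rewrite <- mulz_assoc, mulz_inv_r by exact Huv.
      apply HVnf. apply HVs. eauto.
  - intros z Tz. destruct (proj1 (HT z) Tz) as [t [Wt ->]]. rewrite embz_mul.
    apply O_plus_embz. apply TPz_mul; [apply Ug| apply HWtp; exact Wt].
Qed.

Lemma dep_of_cross (u0 u1 u2 v0 v1 v2 : R) :
  u1*v2 - u2*v1 = 0 -> u2*v0 - u0*v2 = 0 -> u0*v1 - u1*v0 = 0 ->
  exists s t, ~ (s = 0 /\ t = 0) /\ s*u0 + t*v0 = 0 /\ s*u1 + t*v1 = 0 /\ s*u2 + t*v2 = 0.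
Proof.
  intros c0 c1 c2.
  destruct (Req_dec u0 0) as [h0|h0]; [destruct (Req_dec u1 0) as [h1|h1]; [destruct (Req_dec u2 0) as [h2|h2]|]|].
  - exists 1, 0. subst. repeat split; try lra.
  - exists v2, (-u2). split; [intros [_ h]; lra|]. subst. repeat split; lra.
  - exists v1, (-u1). split; [intros [_ h]; lra|]. subst. repeat split; lra.
  - exists v0, (-u0). split; [intros [_ h]; lra|]. repeat split; lra.
Qed.

Lemma aff_dist p q r : aff_indep3 p q r -> p <> q /\ p <> r /\ q <> r.
Proof.
  intro H. repeat split; intro e; subst.
  - destruct (H 1 0) as [h _]; [|lra]. destruct r, q; unfold padd, pscale, psub, pzero; simpl; apply pt_eq; ring.
  - destruct (H 0 1) as [_ h]; [|lra]. destruct r, q; unfold padd, pscale, psub, pzero; simpl; apply pt_eq; ring.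
  - destruct (H 1 (-1)) as [h _]; [|lra]. destruct r, p; unfold padd, pscale, psub, pzero; simpl; apply pt_eq; ring.
Qed.


Ltac wmem := first [left; reflexivity | right; left; reflexivity | right; right; reflexivity].
Ltac hvs_tac t0 t1 t2 :=
  split;
  [ intros [ -> | [ -> | -> ] ]; [exists t0|exists t1|exists t2]; (split; [wmem | reflexivity])
  | intros [t [[ -> | [ -> | -> ] ] ->]]; wmem ].

Lemma hvs1 x : Vset1 x <-> exists t, Vset1 t /\ x = mulz e3 t. Proof. hvs_tac e3 al ab. Qed.
Lemma hvs2 x : Vset2 x <-> exists t, Vset2 t /\ x = mulz e3 t. Proof. hvs_tac e3 be ab. Qed.
Lemma hvs3 x : Vset3 x <-> exists t, Vset1 t /\ x = mulz ali t. Proof. hvs_tac e3 al ab. Qed.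
Lemma hvs4 x : Vset4 x <-> exists t, Vset2 t /\ x = mulz bei t. Proof. hvs_tac e3 be ab. Qed.
Lemma hvs5 x : Vset5 x <-> exists t, Vset1 t /\ x = mulz abi t. Proof. hvs_tac e3 al ab. Qed.
Lemma hvs6 x : Vset6 x <-> exists t, Vset2 t /\ x = mulz abi t. Proof. hvs_tac e3 be ab. Qed.

Lemma W1tp t : Vset1 t -> TPz t.
Proof. intros [ -> | [ -> | -> ] ]; [apply TP_e3|apply TP_al|apply TP_ab]. Qed.
Lemma W2tp t : Vset2 t -> TPz t.
Proof. intros [ -> | [ -> | -> ] ]; [apply TP_e3|apply TP_be|apply TP_ab]. Qed.

Ltac vnf := intros ? [ -> | [ -> | -> ] ]; reflexivity.
Lemma vnf1 x : Vset1 x -> dotz nf1 x = 2%Z. Proof. revert x; vnf. Qed.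
Lemma vnf2 x : Vset2 x -> dotz nf2 x = 1%Z. Proof. revert x; vnf. Qed.
Lemma vnf3 x : Vset3 x -> dotz nf3 x = 2%Z. Proof. revert x; vnf. Qed.
Lemma vnf4 x : Vset4 x -> dotz nf4 x = 1%Z. Proof. revert x; vnf. Qed.
Lemma vnf5 x : Vset5 x -> dotz nf5 x = 2%Z. Proof. revert x; vnf. Qed.
Lemma vnf6 x : Vset6 x -> dotz nf6 x = 1%Z. Proof. revert x; vnf. Qed.

Lemma normal_int (a : pt) (c : R) (xP xQ xR : Z3) :
  a <> pzero -> lin a (embz xP) = c -> lin a (embz xQ) = c -> lin a (embz xR) = c ->
  aff_indep3 (embz xP) (embz xQ) (embz xR) ->
  exists (n : Z3) (kap : R), 0 < kap /\ (forall x, lin a (embz x) = kap * IZR (dotz n x)) /\ n <> mkZ3 0 0 0.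
Proof.
  intros Ha LP LQ LR Hind.
  set (l0 := lin a (Er 1 0 0)). set (l1 := lin a (Er 0 1 0)). set (l2 := lin a (Er 0 0 1)).
  assert (Hl : forall x, lin a (embz x) = l0 * IZR (z0 x) + l1 * IZR (z1 x) + l2 * IZR (z2 x)).
  { intro x. unfold l0, l1, l2, lin, embz. rewrite emb_Er. unfold Er, ev; cbn [px py pz]. ring. }
  set (uz0 := (z0 xQ - z0 xP)%Z). set (uz1 := (z1 xQ - z1 xP)%Z). set (uz2 := (z2 xQ - z2 xP)%Z).
  set (vz0 := (z0 xR - z0 xP)%Z). set (vz1 := (z1 xR - z1 xP)%Z). set (vz2 := (z2 xR - z2 xP)%Z).
  set (n := mkZ3 (uz1*vz2 - uz2*vz1) (uz2*vz0 - uz0*vz2) (uz0*vz1 - uz1*vz0)).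
  assert (lU : l0 * IZR uz0 + l1 * IZR uz1 + l2 * IZR uz2 = 0).
  { unfold uz0, uz1, uz2. rewrite !minus_IZR. rewrite Hl in LP, LQ. lra. }
  assert (lV : l0 * IZR vz0 + l1 * IZR vz1 + l2 * IZR vz2 = 0).
  { unfold vz0, vz1, vz2. rewrite !minus_IZR. rewrite Hl in LP, LR. lra. }
  destruct (cross_prop l0 l1 l2 (IZR uz0) (IZR uz1) (IZR uz2) (IZR vz0) (IZR vz1) (IZR vz2) lU lV)
    as [C0 [C1 C2]].
  assert (En : IZR (z0 n) = IZR uz1 * IZR vz2 - IZR uz2 * IZR vz1 /\
               IZR (z1 n) = IZR uz2 * IZR vz0 - IZR uz0 * IZR vz2 /\
               IZR (z2 n) = IZR uz0 * IZR vz1 - IZR uz1 * IZR vz0).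
  { unfold n; cbn [z0 z1 z2]. rewrite !minus_IZR, !mult_IZR. auto. }
  clearbody n. destruct En as [E0 [E1 E2]]. rewrite <- E0, <- E1, <- E2 in C0, C1, C2.
  set (N0 := IZR (z0 n)) in *. set (N1 := IZR (z1 n)) in *. set (N2 := IZR (z2 n)) in *.
  assert (nnz : ~ (N0 = 0 /\ N1 = 0 /\ N2 = 0)).
  { intros [h0 [h1 h2]].
    destruct (dep_of_cross (IZR uz0) (IZR uz1) (IZR uz2) (IZR vz0) (IZR vz1) (IZR vz2)) as [s [t [st [e0 [e1 e2]]]]];
      [lra|lra|lra|].
    apply st. apply Hind.
    unfold uz0, uz1, uz2, vz0, vz1, vz2 in e0, e1, e2. rewrite !minus_IZR in e0, e1, e2.
    unfold embz; rewrite !emb_Er. apply pt_ext; unfold psub, padd, pscale, pzero, Er, ev; cbn [px py pz].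
    - transitivity ((s * (IZR (z0 xQ) - IZR (z0 xP)) + t * (IZR (z0 xR) - IZR (z0 xP)))
         + (s * (IZR (z1 xQ) - IZR (z1 xP)) + t * (IZR (z1 xR) - IZR (z1 xP))) * theta 1
         + (s * (IZR (z2 xQ) - IZR (z2 xP)) + t * (IZR (z2 xR) - IZR (z2 xP))) * theta 1 ^ 2); [ring|].
      rewrite e0, e1, e2. ring.
    - transitivity ((s * (IZR (z0 xQ) - IZR (z0 xP)) + t * (IZR (z0 xR) - IZR (z0 xP)))
         + (s * (IZR (z1 xQ) - IZR (z1 xP)) + t * (IZR (z1 xR) - IZR (z1 xP))) * theta 2
         + (s * (IZR (z2 xQ) - IZR (z2 xP)) + t * (IZR (z2 xR) - IZR (z2 xP))) * theta 2 ^ 2); [ring|].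
      rewrite e0, e1, e2. ring.
    - transitivity ((s * (IZR (z0 xQ) - IZR (z0 xP)) + t * (IZR (z0 xR) - IZR (z0 xP)))
         + (s * (IZR (z1 xQ) - IZR (z1 xP)) + t * (IZR (z1 xR) - IZR (z1 xP))) * theta 3
         + (s * (IZR (z2 xQ) - IZR (z2 xP)) + t * (IZR (z2 xR) - IZR (z2 xP))) * theta 3 ^ 2); [ring|].
      rewrite e0, e1, e2. ring. }
  assert (Npos : 0 < N0*N0 + N1*N1 + N2*N2).
  { destruct (Req_dec N0 0); [destruct (Req_dec N1 0); [destruct (Req_dec N2 0)|]|].
    - exfalso; apply nnz; auto.
    - assert (0 < N2*N2) by (apply Rsqr_pos_lt; auto). nra.
    - assert (0 < N1*N1) by (apply Rsqr_pos_lt; auto). nra.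
    - assert (0 < N0*N0) by (apply Rsqr_pos_lt; auto). nra. }
  set (NN := N0*N0 + N1*N1 + N2*N2) in *.
  set (k0 := (l0*N0 + l1*N1 + l2*N2) / NN).
  assert (L0 : l0 = k0 * N0) by (unfold k0; field_simplify; [|lra]; apply (Rmult_eq_reg_r NN); [|lra]; field_simplify; lra).
  assert (L1 : l1 = k0 * N1) by (unfold k0; apply (Rmult_eq_reg_r NN); [|lra]; field_simplify; lra).
  assert (L2 : l2 = k0 * N2) by (unfold k0; apply (Rmult_eq_reg_r NN); [|lra]; field_simplify; lra).
  assert (k0nz : k0 <> 0).
  { intro h. apply (lin_nz a Ha). fold l0 l1 l2. rewrite L0, L1, L2, h. repeat split; ring. }
  destruct (Rlt_or_le 0 k0) as [kp|kn].
  - exists n, k0. split; [exact kp|]. split.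
    + intro x. rewrite Hl. unfold dotz. rewrite !plus_IZR, !mult_IZR. fold N0 N1 N2.
      rewrite L0, L1, L2. ring.
    + intro h. apply nnz. unfold N0, N1, N2. rewrite h. simpl. auto.
  - exists (mkZ3 (- z0 n) (- z1 n) (- z2 n)), (- k0). split; [lra|]. split.
    + intro x. rewrite Hl. unfold dotz; cbn [z0 z1 z2]. rewrite !plus_IZR, !mult_IZR, !opp_IZR. fold N0 N1 N2.
      rewrite L0, L1, L2. ring.
    + intro h. apply nnz.
      assert (h0 := f_equal z0 h). assert (h1 := f_equal z1 h). assert (h2 := f_equal z2 h).
      cbn [z0 z1 z2] in h0, h1, h2.
      assert (g0 : z0 n = 0%Z) by lia. assert (g1 : z1 n = 0%Z) by lia. assert (g2 : z2 n = 0%Z) by lia.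
      unfold N0, N1, N2. rewrite g0, g1, g2. auto.
Qed.

Lemma forward F : is_facet (conv O_plus) F ->
  exists u : pt, unit_O u /\ totally_positive u /\
      ((forall x, F x <-> mul_set u (conv tri1) x) \/
       (forall x, F x <-> mul_set u (conv tri2) x)).
Proof.
  intros [a [c [Ha [Hsup [HF [p [q [r [Fp [Fq [Fr Hind]]]]]]]]]]].
  assert (Hsup' : forall y, O_plus y -> c <= lin a y) by (intros; apply Hsup; apply Oplus_conv; auto).
  set (Xf := fun y => O_plus y /\ lin a y = c).
  assert (CX : forall z, F z -> conv Xf z).
  { intros z Fz. apply HF in Fz. destruct Fz as [[l [HFl [Hs Hz]]] Hl].
    fold (pointL l) in Hz. fold (sumL l) in Hs.
    destruct (conv_face_list O_plus a c l HFl Hsup') as [l' [HF' [Hs' Hp']]].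
    { rewrite <- Hz, Hl, Hs; ring. }
    exists l'. split; [exact HF'|]. split.
    - change (sumL l' = 1). congruence.
    - change (z = pointL l'). congruence. }
  destruct (extract3 Xf p q r (CX p Fp) (CX q Fq) (CX r Fr) Hind)
    as [P [Q [R [[OP LP] [[OQ LQ] [[OR LR] HindP]]]]]].
  destruct (in_O_embz P (proj1 OP)) as [xP ->].
  destruct (in_O_embz Q (proj1 OQ)) as [xQ ->].
  destruct (in_O_embz R (proj1 OR)) as [xR ->].
  destruct (normal_int a c xP xQ xR Ha LP LQ LR HindP) as [n' [kap [Hkap [Hlin Hn'nz]]]].
  assert (Hge : forall x, TPz x -> (dotz n' xP <= dotz n' x)%Z).
  { intros x Hx. apply le_IZR. apply (Rmult_le_reg_l kap); [exact Hkap|].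
    rewrite <- !Hlin, LP. apply Hsup'. apply O_plus_embz. exact Hx. }
  destruct (Zmin_ex (fun z => exists u, Uz u /\ z = dotz n' u) (dotz n' xP)) as [zm [[u0 [Hu0 ->]] Hmin]].
  { exists (dotz n' e3). exists e3. split; [apply U_e3|reflexivity]. }
  { intros z [u [Hu ->]]. apply Hge. apply Hu. }
  destruct Hu0 as [TPu0 [v0 Huv]].
  assert (Hu0 : Uz u0) by (split; [exact TPu0| exists v0; exact Huv]).
  assert (TPv0 : TPz v0) by (eapply TPz_inv; eauto).
  set (k := kvec n' u0).
  assert (Hke : dotz k e3 = dotz n' u0) by (unfold k; rewrite <- dot_mul, mulz_e3_r; reflexivity).
  assert (Hnb : forall eps, Uz eps -> (dotz k e3 <= dotz k eps)%Z).
  { intros eps He. rewrite Hke. unfold k. rewrite <- dot_mul. apply Hmin. exists (mulz u0 eps).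
    split; [apply Uz_mul; auto|reflexivity]. }
  assert (Hkx : forall x, dotz k (mulz v0 x) = dotz n' x).
  { intro x. unfold k. rewrite <- dot_mul, mulz_inv_l by exact Huv. reflexivity. }
  assert (HkGE := decomp_ge k (Hnb _ U_al) (Hnb _ U_be) (Hnb _ U_ab) (Hnb _ U_ali) (Hnb _ U_bei) (Hnb _ U_abi)).
  assert (TPxP : TPz xP) by apply OP. assert (TPxQ : TPz xQ) by apply OQ. assert (TPxR : TPz xR) by apply OR.
  assert (EQ : forall x, lin a (embz x) = c -> dotz n' x = dotz n' xP).
  { intros x h. apply eq_IZR. apply (Rmult_eq_reg_l kap); [|lra]. rewrite <- !Hlin, h, LP. reflexivity. }
  assert (EPu : dotz n' xP = dotz n' u0).
  { assert (h1 := HkGE (mulz v0 xP) (TPz_mul _ _ TPv0 TPxP)). rewrite Hkx, Hke in h1.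
    assert (h2 := Hge u0 TPu0). lia. }
  assert (Hface : forall x, TPz x -> lin a (embz x) = c -> dotz k (mulz v0 x) = dotz k e3).
  { intros x hx h. rewrite Hkx, Hke, <- EPu. apply EQ. exact h. }
  destruct (aff_dist _ _ _ HindP) as [dPQ [dPR dQR]].
  assert (inj : forall x y, x <> y -> mulz v0 x <> mulz v0 y).
  { intros x y hxy h. apply hxy. rewrite <- (mulz_inv_l u0 v0 x Huv), <- (mulz_inv_l u0 v0 y Huv), h. reflexivity. }
  assert (knz : k <> mkZ3 0 0 0).
  { intro hk. apply Hn'nz.
    assert (Z0 : forall x, dotz n' x = 0%Z) by (intro x; rewrite <- Hkx, hk; reflexivity).
    destruct n' as [m0 m1 m2].
    assert (h0 := Z0 e3). assert (h1 := Z0 (mkZ3 0 1 0)). assert (h2 := Z0 (mkZ3 0 0 1)).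
    unfold dotz, e3 in h0, h1, h2; cbn [z0 z1 z2] in h0, h1, h2. apply Z3_eq; lia. }
  assert (Hc : c = kap * IZR (dotz n' u0)) by (rewrite <- EPu, <- Hlin; symmetry; exact LP).
  destruct (face_struct k (mulz v0 xP) (mulz v0 xQ) (mulz v0 xR)
     (Hnb _ U_al) (Hnb _ U_be) (Hnb _ U_ab) (Hnb _ U_ali) (Hnb _ U_bei) (Hnb _ U_abi)
     (TPz_mul _ _ TPv0 TPxP) (TPz_mul _ _ TPv0 TPxQ) (TPz_mul _ _ TPv0 TPxR)
     (Hface _ TPxP LP) (Hface _ TPxQ LQ) (Hface _ TPxR LR)
     (inj _ _ (fun e => dPQ (f_equal embz e))) (inj _ _ (fun e => dPR (f_equal embz e)))
     (inj _ _ (fun e => dQR (f_equal embz e))) knz)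
    as [Pj|[Pj|[Pj|[Pj|[Pj|Pj]]]]].
  - destruct (finish tri1 Vset1 Vset1 nf1 e3 2 F a c n' kap u0 v0 HF Hsup' Hkap Hlin Hu0 Huv Hc Pj
      I1_1 (proj1 nfe3) vnf1 hvs1 tri1_char W1tp U_e3) as [u [? [? ?]]].
    exists u; auto.
  - destruct (finish tri2 Vset2 Vset2 nf2 e3 1 F a c n' kap u0 v0 HF Hsup' Hkap Hlin Hu0 Huv Hc Pj
      I1_2 (proj1 (proj2 nfe3)) vnf2 hvs2 tri2_char W2tp U_e3) as [u [? [? ?]]].
    exists u; auto.
  - destruct (finish tri1 Vset1 Vset3 nf3 ali 2 F a c n' kap u0 v0 HF Hsup' Hkap Hlin Hu0 Huv Hc Pj
      I1_3 (proj1 (proj2 (proj2 nfe3))) vnf3 hvs3 tri1_char W1tp U_ali) as [u [? [? ?]]].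
    exists u; auto.
  - destruct (finish tri2 Vset2 Vset4 nf4 bei 1 F a c n' kap u0 v0 HF Hsup' Hkap Hlin Hu0 Huv Hc Pj
      I1_4 (proj1 (proj2 (proj2 (proj2 nfe3)))) vnf4 hvs4 tri2_char W2tp U_bei) as [u [? [? ?]]].
    exists u; auto.
  - destruct (finish tri1 Vset1 Vset5 nf5 abi 2 F a c n' kap u0 v0 HF Hsup' Hkap Hlin Hu0 Huv Hc Pj
      I1_5 (proj1 (proj2 (proj2 (proj2 (proj2 nfe3))))) vnf5 hvs5 tri1_char W1tp U_abi) as [u [? [? ?]]].
    exists u; auto.
  - destruct (finish tri2 Vset2 Vset6 nf6 abi 1 F a c n' kap u0 v0 HF Hsup' Hkap Hlin Hu0 Huv Hc Pj
      I1_6 (proj2 (proj2 (proj2 (proj2 (proj2 nfe3))))) vnf6 hvs6 tri2_char W2tp U_abi) as [u [? [? ?]]].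
    exists u; auto.
Qed.

Theorem proposition3p2 :
  forall F : pt -> Prop,
    is_facet (conv O_plus) F <->
    exists u : pt, unit_O u /\ totally_positive u /\
      ((forall x, F x <-> mul_set u (conv tri1) x) \/
       (forall x, F x <-> mul_set u (conv tri2) x)).
Proof.
  intro F. split.
  - apply forward.
  - intros [u [Hu [Hp [H|H]]]]; [eapply back1|eapply back2]; eauto.
Qed.
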